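(* Let $\mathcal{R}=(\mathcal{X},(\mathcal{M},\mathcal{I}))$ be a reflexive graph category with isomorphisms that has products stable under face maps and degeneracies. Then for each natural number $n$, the category $\mathcal{M}^n\to\mathcal{M}$ has (binary) products.
   Context: Fix a locally small category $\mathcal{C}$ with finite products; all categories, functors and natural transformations below are internal to $\mathcal{C}$ (objects of objects $C_0$, of morphisms $C_1$, source/target $\mathsf{s}_C,\mathsf{t}_C$, identities $\mathsf{id}_C$, composition $\circ_C$ on generalized morphisms $J\to C_1$, object/morphism parts $F_0,F_1$ of functors). A reflexive graph category $\mathcal{X}$ consists of internal categories $\mathcal{X}(0),\mathcal{X}(1)$, two distinct internal functors $\mathcal{X}(\mathbf{f}_\top),\mathcal{X}(\mathbf{f}_\bot):\mathcal{X}(1)\to\mathcal{X}(0)$ (face maps) and an internal functor $\mathcal{X}(\mathbf{d}):\mathcal{X}(0)\to\mathcal{X}(1)$ (degeneracy) with $\mathcal{X}(\mathbf{f}_\star)\circ\mathcal{X}(\mathbf{d})=\mathsf{id}$; $\mathcal{X}^n$ is the componentwise product. A reflexive graph functor $\mathcal{F}:\mathcal{X}\to\mathcal{Y}$ is a pair of internal functors $\mathcal{F}(l):\mathcal{X}(l)\to\mathcal{Y}(l)$; face map-preserving: $\mathcal{Y}(\mathbf{f}_\star)\circ\mathcal{F}(1)=\mathcal{F}(0)\circ\mathcal{X}(\mathbf{f}_\star)$; degeneracy-preserving: equipped with an internal natural isomorphism $\varepsilon_\mathcal{F}:\mathcal{Y}(\mathbf{d})\circ\mathcal{F}(0)\to\mathcal{F}(1)\circ\mathcal{X}(\mathbf{d})$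 with $\mathcal{Y}(\mathbf{f}_\star)_1\circ\varepsilon_\mathcal{F}=\mathsf{id}_{\mathcal{Y}(0)}\circ\mathcal{F}(0)_0$. Reflexive graph natural transformations $\eta:\mathcal{F}\to\mathcal{G}$: pairs of internal natural transformations $\eta(l):\mathcal{F}(l)\to\mathcal{G}(l)$; face map-preserving: $\mathcal{Y}(\mathbf{f}_\star)_1\circ\eta(1)=\eta(0)\circ\mathcal{X}(\mathbf{f}_\star)_0$; degeneracy-preserving: $(\eta(1)\circ\mathcal{X}(\mathbf{d})_0)\circ_{\mathcal{Y}(1)}\varepsilon_\mathcal{F}=\varepsilon_\mathcal{G}\circ_{\mathcal{Y}(1)}(\mathcal{Y}(\mathbf{d})_1\circ\eta(0))$. Composition $(\mathcal{G}\circ\mathcal{F})(l)=\mathcal{G}(l)\circ\mathcal{F}(l)$, $\varepsilon_{\mathcal{G}\circ\mathcal{F}}=(\mathcal{G}(1)_1\circ\varepsilon_\mathcal{F})\circ(\varepsilon_\mathcal{G}\circ\mathcal{F}(0)_0)$. A reflexive graph category with isomorphisms $\mathcal{R}=(\mathcal{X},(\mathcal{M},\mathcal{I}))$: reflexive graph categories $\mathcal{X},\mathcal{M}$ and a reflexive graph functor $\mathcal{I}:\mathcal{M}\to\mathcal{X}$ with $\mathcal{I}(l)_0$ iso, $\mathcal{I}(l)_1$ monic, $\mathcal{I}(0)\circ\mathcal{M}(\mathbf{f}_\star)=\mathcal{X}(\mathbf{f}_\star)\circ\mathcal{I}(1)$, $\mathcal{I}(1)\circ\mathcal{M}(\mathbf{d})=\mathcal{X}(\mathbf{d})\circ\mathcal{I}(0)$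 (so $\varepsilon_\mathcal{I}$ is an identity), and every morphism of $\mathcal{M}(l)$ an isomorphism; $\mathcal{M}(l)$ is regarded as a wide subcategory of $\mathcal{X}(l)$, and a morphism of $\mathcal{X}(l)$ ''lies in $\mathcal{M}(l)$'' if it is in the image of $\mathcal{I}(l)_1$. The category $\mathcal{M}^n\to\mathcal{M}$ has as objects the face map- and degeneracy-preserving reflexive graph functors $\mathcal{M}^n\to\mathcal{M}$ and as morphisms $\mathcal{F}\to\mathcal{G}$ the face map- and degeneracy-preserving reflexive graph natural transformations $\mathcal{I}\circ\mathcal{F}\to\mathcal{I}\circ\mathcal{G}$, with componentwise identities and composition. An internal category $C$ has products if it is equipped with $\times_C:C_0\times C_0\to C_0$ and projections $\mathsf{fst}_C,\mathsf{snd}_C:C_0\times C_0\to C_1$ (from $a\times_C b$ to $a$, resp. $b$) satisfying the usual universal property for all generalized objects and morphisms; this induces $f\times_C g$ on morphisms. $\mathcal{R}$ has products stable under face maps and degeneracies if: $\mathcal{X}(0)$ and $\mathcal{X}(1)$ have products; for $f,g:J\to\mathcal{X}(l)_1$ lying in $\mathcal{M}(l)$, $f\times_{\mathcal{X}(l)}g$ lies in $\mathcal{M}(l)$; for both $\star$, $\mathcal{X}(\mathbf{f}_\star)_0\circ\times_{\mathcal{X}(1)}=\times_{\mathcal{X}(0)}\circ(\mathcal{X}(\mathbf{f}_\star)_0\times\mathcal{X}(\mathbf{f}_\star)_0)$ with the canonical comparison morphism being the identity; and the canonical comparison morphism $\eta^\times_\mathcal{X}[a,b]:\mathcal{X}(\mathbf{d})_0(a\times_{\mathcal{X}(0)}b)\to\mathcal{X}(\mathbf{d})_0(a)\times_{\mathcal{X}(1)}\mathcal{X}(\mathbf{d})_0(b)$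 (induced by $\mathcal{X}(\mathbf{d})_1$ applied to the projections) is an isomorphism lying in $\mathcal{M}(1)$. *)

(* Defs.v *)
Set Implicit Arguments.
Unset Strict Implicit.

Record Category := {
  ob :> Type;
  hom : ob -> ob -> Type;
  idc : forall a, hom a a;
  compc : forall a b c, hom b c -> hom a b -> hom a c;
  compA : forall a b c d (h : hom c d) (g : hom b c) (f : hom a b),
      compc h (compc g f) = compc (compc h g) f;
  comp1l : forall a b (f : hom a b), compc (idc b) f = f;
  comp1r : forall a b (f : hom a b), compc f (idc a) = f;
  one : ob;
  bang : forall a, hom a one;
  bang_uniq : forall a (f : hom a one), f = bang a;
  prod : ob -> ob -> ob;
  pi1 : forall a b, hom (prod a b) a;
  pi2 : forall a b, hom (prod a b) b;
  pair : forall c a b, hom c a -> hom c b -> hom c (prod a b);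
  pair_pi1 : forall c a b (f : hom c a) (g : hom c b), compc (pi1 a b) (pair f g) = f;
  pair_pi2 : forall c a b (f : hom c a) (g : hom c b), compc (pi2 a b) (pair f g) = g;
  pair_uniq : forall c a b (h : hom c (prod a b)),
      h = pair (compc (pi1 a b) h) (compc (pi2 a b) h)
}.

Arguments hom {C} a b : rename.
Arguments idc {C} a : rename.
Arguments compc {C a b c} g f : rename.
Arguments one {C} : rename.
Arguments bang {C} a : rename.
Arguments prod {C} a b : rename.
Arguments pi1 {C a b} : rename.
Arguments pi2 {C a b} : rename.
Arguments pair {C c a b} f g : rename.

Notation "g ⊙ f" := (compc g f) (at level 40, left associativity).

Section Internal.
Variable C : Category.

Definition prodmap (a b c d : C) (f : hom a c) (g : hom b d) : hom (prod a b) (prod c d) :=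
  pair (f ⊙ pi1) (g ⊙ pi2).

Definition iso_C (a b : C) (f : hom a b) : Prop :=
  exists g : hom b a, g ⊙ f = idc a /\ f ⊙ g = idc b.

Definition monic_C (a b : C) (f : hom a b) : Prop :=
  forall z (u v : hom z a), f ⊙ u = f ⊙ v -> u = v.

(* Internal categories (data + axioms).  Composition is given on       *)
(* generalized morphisms J -> C_1: [icmp D f g] is "f o g", meaningful  *)
(* when f and g are composable (src f = tgt g).                         *)
Record icat := {
  c0 : C; c1 : C;
  src : hom c1 c0; tgt : hom c1 c0;
  ida : hom c0 c1;
  icmp : forall J : C, hom J c1 -> hom J c1 -> hom J c1
}.

Arguments c0 i : rename.
Arguments c1 i : rename.
Arguments src i : rename.
Arguments tgt i : rename.
Arguments ida i : rename.
Arguments icmp i {J} _ _ : rename.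

Definition composable (D : icat) (J : C) (f g : hom J (c1 D)) : Prop :=
  src D ⊙ f = tgt D ⊙ g.

Definition is_icat (D : icat) : Prop :=
  src D ⊙ ida D = idc (c0 D) /\ tgt D ⊙ ida D = idc (c0 D) /\
  (forall J (f g : hom J (c1 D)), composable f g ->
      src D ⊙ icmp D f g = src D ⊙ g /\ tgt D ⊙ icmp D f g = tgt D ⊙ f) /\
  (forall J K (h : hom K J) (f g : hom J (c1 D)), composable f g ->
      icmp D f g ⊙ h = icmp D (f ⊙ h) (g ⊙ h)) /\
  (forall J (f : hom J (c1 D)), icmp D (ida D ⊙ (tgt D ⊙ f)) f = f) /\
  (forall J (f : hom J (c1 D)), icmp D f (ida D ⊙ (src D ⊙ f)) = f) /\
  (forall J (f g h : hom J (c1 D)), composable f g -> composable g h ->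
      icmp D f (icmp D g h) = icmp D (icmp D f g) h).

Definition is_iiso (D : icat) (J : C) (f : hom J (c1 D)) : Prop :=
  exists g : hom J (c1 D),
    src D ⊙ g = tgt D ⊙ f /\ tgt D ⊙ g = src D ⊙ f /\
    icmp D g f = ida D ⊙ (src D ⊙ f) /\ icmp D f g = ida D ⊙ (tgt D ⊙ f).

Record ifun (D E : icat) := { fobj : hom (c0 D) (c0 E); fmor : hom (c1 D) (c1 E) }.

Definition is_ifun (D E : icat) (F : ifun D E) : Prop :=
  src E ⊙ fmor F = fobj F ⊙ src D /\ tgt E ⊙ fmor F = fobj F ⊙ tgt D /\
  fmor F ⊙ ida D = ida E ⊙ fobj F /\
  (forall J (f g : hom J (c1 D)), composable f g ->
      fmor F ⊙ icmp D f g = icmp E (fmor F ⊙ f) (fmor F ⊙ g)).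

Definition ifun_id (D : icat) : ifun D D := {| fobj := idc (c0 D); fmor := idc (c1 D) |}.

Definition ifun_comp (D E F : icat) (G : ifun E F) (H : ifun D E) : ifun D F :=
  {| fobj := fobj G ⊙ fobj H; fmor := fmor G ⊙ fmor H |}.

Definition ifun_eq (D E : icat) (F G : ifun D E) : Prop :=
  fobj F = fobj G /\ fmor F = fmor G.

Definition is_inat (D E : icat) (F G : ifun D E) (eta : hom (c0 D) (c1 E)) : Prop :=
  src E ⊙ eta = fobj F /\ tgt E ⊙ eta = fobj G /\
  (forall J (f : hom J (c1 D)),
      icmp E (eta ⊙ (tgt D ⊙ f)) (fmor F ⊙ f) = icmp E (fmor G ⊙ f) (eta ⊙ (src D ⊙ f))).

Definition is_inat_iso (D E : icat) (F G : ifun D E) (eta : hom (c0 D) (c1 E)) : Prop :=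
  is_inat F G eta /\
  exists eta' : hom (c0 D) (c1 E), is_inat G F eta' /\
    icmp E eta' eta = ida E ⊙ fobj F /\ icmp E eta eta' = ida E ⊙ fobj G.

Record iprod_data (D : icat) := {
  ipr : hom (prod (c0 D) (c0 D)) (c0 D);
  ifst : hom (prod (c0 D) (c0 D)) (c1 D);
  isnd : hom (prod (c0 D) (c0 D)) (c1 D)
}.

Definition is_iprod (D : icat) (P : iprod_data D) : Prop :=
  src D ⊙ ifst P = ipr P /\ tgt D ⊙ ifst P = pi1 /\
  src D ⊙ isnd P = ipr P /\ tgt D ⊙ isnd P = pi2 /\
  (forall J (a b c : hom J (c0 D)) (f g : hom J (c1 D)),
      src D ⊙ f = c -> tgt D ⊙ f = a -> src D ⊙ g = c -> tgt D ⊙ g = b ->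
      exists! h : hom J (c1 D),
        src D ⊙ h = c /\ tgt D ⊙ h = ipr P ⊙ pair a b /\
        icmp D (ifst P ⊙ pair a b) h = f /\ icmp D (isnd P ⊙ pair a b) h = g).

(* [iprod_mor P f g h] : h is the induced morphism f x g. *)
Definition iprod_mor (D : icat) (P : iprod_data D) (J : C) (f g h : hom J (c1 D)) : Prop :=
  src D ⊙ h = ipr P ⊙ pair (src D ⊙ f) (src D ⊙ g) /\
  tgt D ⊙ h = ipr P ⊙ pair (tgt D ⊙ f) (tgt D ⊙ g) /\
  icmp D (ifst P ⊙ pair (tgt D ⊙ f) (tgt D ⊙ g)) h
    = icmp D f (ifst P ⊙ pair (src D ⊙ f) (src D ⊙ g)) /\
  icmp D (isnd P ⊙ pair (tgt D ⊙ f) (tgt D ⊙ g)) h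
    = icmp D g (isnd P ⊙ pair (src D ⊙ f) (src D ⊙ g)).

(* Reflexive graph categories.  Face maps indexed by bool:              *)
(* face true = f_top, face false = f_bot.                               *)
Record rgcat := {
  r0 : icat; r1 : icat;
  face : bool -> ifun r1 r0;
  degen : ifun r0 r1
}.

Arguments r0 r : rename.
Arguments r1 r : rename.
Arguments face r s : rename.
Arguments degen r : rename.

Definition is_rgcat (X : rgcat) : Prop :=
  is_icat (r0 X) /\ is_icat (r1 X) /\
  (forall s, is_ifun (face X s)) /\ is_ifun (degen X) /\
  ~ ifun_eq (face X true) (face X false) /\
  (forall s, ifun_eq (ifun_comp (face X s) (degen X)) (ifun_id (r0 X))).

(* Reflexive graph functors, with the degeneracy comparison eps. *)
Record rgfun (X Y : rgcat) := {
  F0 : ifun (r0 X) (r0 Y);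
  F1 : ifun (r1 X) (r1 Y);
  eps : hom (c0 (r0 X)) (c1 (r1 Y))
}.

Definition is_rgfun (X Y : rgcat) (F : rgfun X Y) : Prop :=
  is_ifun (F0 F) /\ is_ifun (F1 F).

Definition face_preserving (X Y : rgcat) (F : rgfun X Y) : Prop :=
  forall s, ifun_eq (ifun_comp (face Y s) (F1 F)) (ifun_comp (F0 F) (face X s)).

Definition degen_preserving (X Y : rgcat) (F : rgfun X Y) : Prop :=
  is_inat_iso (ifun_comp (degen Y) (F0 F)) (ifun_comp (F1 F) (degen X)) (eps F) /\
  (forall s, fmor (face Y s) ⊙ eps F = ida (r0 Y) ⊙ fobj (F0 F)).

Definition rgfun_comp (X Y Z : rgcat) (G : rgfun Y Z) (F : rgfun X Y) : rgfun X Z :=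
  {| F0 := ifun_comp (F0 G) (F0 F);
     F1 := ifun_comp (F1 G) (F1 F);
     eps := icmp (r1 Z) (fmor (F1 G) ⊙ eps F) (eps G ⊙ fobj (F0 F)) |}.

Record rgnat (X Y : rgcat) := {
  eta0 : hom (c0 (r0 X)) (c1 (r0 Y));
  eta1 : hom (c0 (r1 X)) (c1 (r1 Y))
}.

Definition is_rgnat (X Y : rgcat) (F G : rgfun X Y) (e : rgnat X Y) : Prop :=
  is_inat (F0 F) (F0 G) (eta0 e) /\ is_inat (F1 F) (F1 G) (eta1 e).

Definition rgnat_face_preserving (X Y : rgcat) (e : rgnat X Y) : Prop :=
  forall s, fmor (face Y s) ⊙ eta1 e = eta0 e ⊙ fobj (face X s).

Definition rgnat_degen_preserving (X Y : rgcat) (F G : rgfun X Y) (e : rgnat X Y) : Prop :=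
  icmp (r1 Y) (eta1 e ⊙ fobj (degen X)) (eps F)
  = icmp (r1 Y) (eps G) (fmor (degen Y) ⊙ eta0 e).

Definition lies_in (D E : icat) (I : ifun D E) (J : C) (f : hom J (c1 E)) : Prop :=
  exists k : hom J (c1 D), fmor I ⊙ k = f.

Definition all_iso (D : icat) : Prop :=
  forall J (f : hom J (c1 D)), is_iiso f.

Definition is_rgcat_iso (X M : rgcat) (I : rgfun M X) : Prop :=
  is_rgcat X /\ is_rgcat M /\ is_rgfun I /\
  iso_C (fobj (F0 I)) /\ iso_C (fobj (F1 I)) /\
  monic_C (fmor (F0 I)) /\ monic_C (fmor (F1 I)) /\
  (forall s, ifun_eq (ifun_comp (F0 I) (face M s)) (ifun_comp (face X s) (F1 I))) /\
  ifun_eq (ifun_comp (F1 I) (degen M)) (ifun_comp (degen X) (F0 I)) /\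
  eps I = ida (r1 X) ⊙ fobj (ifun_comp (degen X) (F0 I)) /\
  all_iso (r0 M) /\ all_iso (r1 M).

Definition stable_products (X M : rgcat) (I : rgfun M X)
    (P0 : iprod_data (r0 X)) (P1 : iprod_data (r1 X)) : Prop :=
  is_iprod P0 /\ is_iprod P1 /\
  (* products of morphisms in M(l) lie in M(l) *)
  (forall J (f g h : hom J (c1 (r0 X))),
      lies_in (F0 I) f -> lies_in (F0 I) g -> iprod_mor P0 f g h -> lies_in (F0 I) h) /\
  (forall J (f g h : hom J (c1 (r1 X))),
      lies_in (F1 I) f -> lies_in (F1 I) g -> iprod_mor P1 f g h -> lies_in (F1 I) h) /\
  (* strict preservation by face maps, comparison morphism = identity *)
  (forall s,
     fobj (face X s) ⊙ ipr P1 = ipr P0 ⊙ prodmap (fobj (face X s)) (fobj (face X s)) /\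
     forall J (a b : hom J (c0 (r1 X))) (c : hom J (c1 (r0 X))),
       src (r0 X) ⊙ c = fobj (face X s) ⊙ (ipr P1 ⊙ pair a b) ->
       tgt (r0 X) ⊙ c = ipr P0 ⊙ pair (fobj (face X s) ⊙ a) (fobj (face X s) ⊙ b) ->
       icmp (r0 X) (ifst P0 ⊙ pair (fobj (face X s) ⊙ a) (fobj (face X s) ⊙ b)) c
         = fmor (face X s) ⊙ (ifst P1 ⊙ pair a b) ->
       icmp (r0 X) (isnd P0 ⊙ pair (fobj (face X s) ⊙ a) (fobj (face X s) ⊙ b)) c
         = fmor (face X s) ⊙ (isnd P1 ⊙ pair a b) ->
       c = ida (r0 X) ⊙ (fobj (face X s) ⊙ (ipr P1 ⊙ pair a b))) /\
  (* the degeneracy comparison eta^x[a,b] is an isomorphism lying in M(1) *)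
  (forall J (a b : hom J (c0 (r0 X))) (c : hom J (c1 (r1 X))),
     src (r1 X) ⊙ c = fobj (degen X) ⊙ (ipr P0 ⊙ pair a b) ->
     tgt (r1 X) ⊙ c = ipr P1 ⊙ pair (fobj (degen X) ⊙ a) (fobj (degen X) ⊙ b) ->
     icmp (r1 X) (ifst P1 ⊙ pair (fobj (degen X) ⊙ a) (fobj (degen X) ⊙ b)) c
       = fmor (degen X) ⊙ (ifst P0 ⊙ pair a b) ->
     icmp (r1 X) (isnd P1 ⊙ pair (fobj (degen X) ⊙ a) (fobj (degen X) ⊙ b)) c
       = fmor (degen X) ⊙ (isnd P0 ⊙ pair a b) ->
     is_iiso c /\ lies_in (F1 I) c).

Fixpoint pow_icat (n : nat) (D : icat) : icat :=
  match n with
  | O => {| c0 := one; c1 := one; src := idc one; tgt := idc one; ida := idc one;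
            icmp := fun J _ _ => bang J |}
  | S m => let P := pow_icat m D in
      {| c0 := prod (c0 D) (c0 P); c1 := prod (c1 D) (c1 P);
         src := prodmap (src D) (src P); tgt := prodmap (tgt D) (tgt P);
         ida := prodmap (ida D) (ida P);
         icmp := fun J f g => pair (icmp D (pi1 ⊙ f) (pi1 ⊙ g)) (icmp P (pi2 ⊙ f) (pi2 ⊙ g)) |}
  end.

Fixpoint pow_ifun (n : nat) (D E : icat) (F : ifun D E) : ifun (pow_icat n D) (pow_icat n E) :=
  match n return ifun (pow_icat n D) (pow_icat n E) with
  | O => @Build_ifun (pow_icat 0 D) (pow_icat 0 E) (idc one) (idc one)
  | S m => @Build_ifun (pow_icat (S m) D) (pow_icat (S m) E)
              (prodmap (fobj F) (fobj (pow_ifun m F)))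
              (prodmap (fmor F) (fmor (pow_ifun m F)))
  end.

Definition pow_rgcat (n : nat) (X : rgcat) : rgcat :=
  {| r0 := pow_icat n (r0 X); r1 := pow_icat n (r1 X);
     face := fun s => pow_ifun n (face X s);
     degen := pow_ifun n (degen X) |}.

Section FunCat.
Variables (X M : rgcat) (I : rgfun M X) (n : nat).

Definition MnM_obj (F : rgfun (pow_rgcat n M) M) : Prop :=
  is_rgfun F /\ face_preserving F /\ degen_preserving F.

Definition MnM_hom (F G : rgfun (pow_rgcat n M) M) (e : rgnat (pow_rgcat n M) X) : Prop :=
  is_rgnat (rgfun_comp I F) (rgfun_comp I G) e /\
  rgnat_face_preserving e /\
  rgnat_degen_preserving (rgfun_comp I F) (rgfun_comp I G) e.

Definition MnM_id (F : rgfun (pow_rgcat n M) M) : rgnat (pow_rgcat n M) X :=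
  {| eta0 := ida (r0 X) ⊙ fobj (F0 (rgfun_comp I F));
     eta1 := ida (r1 X) ⊙ fobj (F1 (rgfun_comp I F)) |}.

Definition MnM_comp (e' e : rgnat (pow_rgcat n M) X) : rgnat (pow_rgcat n M) X :=
  {| eta0 := icmp (r0 X) (eta0 e') (eta0 e);
     eta1 := icmp (r1 X) (eta1 e') (eta1 e) |}.

Definition MnM_has_products : Prop :=
  forall A B, MnM_obj A -> MnM_obj B ->
  exists P p1 p2, MnM_obj P /\ MnM_hom P A p1 /\ MnM_hom P B p2 /\
    forall Q q1 q2, MnM_obj Q -> MnM_hom Q A q1 -> MnM_hom Q B q2 ->
      exists h, MnM_hom Q P h /\ MnM_comp p1 h = q1 /\ MnM_comp p2 h = q2 /\
        forall h', MnM_hom Q P h' -> MnM_comp p1 h' = q1 -> MnM_comp p2 h' = q2 -> h' = h.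
End FunCat.

End Internal.

(* Main.v *)
Require Import Defs.
From Stdlib Require Import ssreflect.
Set Implicit Arguments.
Unset Strict Implicit.


Section Basics.
Variable C : Category.

Lemma compA' (a b c d : C) (h : hom c d) (g : hom b c) (f : hom a b) :
  (h ⊙ g) ⊙ f = h ⊙ (g ⊙ f).
Proof. by rewrite compA. Qed.

Lemma pair_comp (z c a b : C) (f : hom c a) (g : hom c b) (h : hom z c) :
  pair f g ⊙ h = pair (f ⊙ h) (g ⊙ h).
Proof. rewrite (pair_uniq (pair f g ⊙ h)). by rewrite !compA pair_pi1 pair_pi2. Qed.

Lemma pair_ext (c a b : C) (f f' : hom c a) (g g' : hom c b) :
  f = f' -> g = g' -> pair f g = pair f' g'.
Proof. by move=> -> ->. Qed.

Lemma iso_mono (a b : C) (f : hom a b) : iso_C f ->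
  forall z (u v : hom z a), f ⊙ u = f ⊙ v -> u = v.
Proof.
move=> [g [Hgf _]] z u v E.
by rewrite -(comp1l u) -(comp1l v) -Hgf -!compA E.
Qed.
End Basics.

Ltac cnorm := repeat (rewrite ?compA' ?pair_comp ?pair_pi1 ?pair_pi2 ?comp1l ?comp1r).

Lemma ifun_ext (C : Category) (D E : icat C) (F G : ifun D E) :
  fobj F = fobj G -> fmor F = fmor G -> F = G.
Proof. destruct F, G; simpl; by move=> -> ->. Qed.

Lemma ifun_eq_eq (C : Category) (D E : icat C) (F G : ifun D E) :
  ifun_eq F G -> F = G.
Proof. move=> [H1 H2]; exact: ifun_ext. Qed.

Section ICat.
Variables (C : Category) (D : icat C) (HD : is_icat D).

Lemma sida0 : src D ⊙ ida D = idc _. Proof. by case: HD. Qed.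
Lemma tida0 : tgt D ⊙ ida D = idc _. Proof. by case: HD => _ []. Qed.
Lemma sida (J : C) (u : hom J _) : src D ⊙ (ida D ⊙ u) = u.
Proof. by rewrite compA sida0 comp1l. Qed.
Lemma tida (J : C) (u : hom J _) : tgt D ⊙ (ida D ⊙ u) = u.
Proof. by rewrite compA tida0 comp1l. Qed.

Lemma cmp_s J (f g : hom J (c1 D)) : composable f g -> src D ⊙ icmp f g = src D ⊙ g.
Proof. move: HD => [_ [_ [H _]]] Hc. by case: (H _ _ _ Hc). Qed.
Lemma cmp_t J (f g : hom J (c1 D)) : composable f g -> tgt D ⊙ icmp f g = tgt D ⊙ f.
Proof. move: HD => [_ [_ [H _]]] Hc. by case: (H _ _ _ Hc). Qed.
Lemma cmp_pre J K (h : hom K J) (f g : hom J (c1 D)) : composable f g ->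
  icmp f g ⊙ h = icmp (f ⊙ h) (g ⊙ h).
Proof. move: HD => [_ [_ [_ [H _]]]] Hc. exact: H. Qed.
Lemma cmp_idl J (f : hom J (c1 D)) a : tgt D ⊙ f = a -> icmp (ida D ⊙ a) f = f.
Proof. move: HD => [_ [_ [_ [_ [H _]]]]] <-. exact: H. Qed.
Lemma cmp_idr J (f : hom J (c1 D)) a : src D ⊙ f = a -> icmp f (ida D ⊙ a) = f.
Proof. move: HD => [_ [_ [_ [_ [_ [H _]]]]]] <-. exact: H. Qed.
Lemma cmpA J (f g h : hom J (c1 D)) : composable f g -> composable g h ->
  icmp f (icmp g h) = icmp (icmp f g) h.
Proof. move: HD => [_ [_ [_ [_ [_ [_ H]]]]]]. exact: H. Qed.

Lemma comp_pre J K (h : hom K J) (f g : hom J (c1 D)) : composable f g -> composable (f ⊙ h) (g ⊙ h).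
Proof. rewrite /composable => E. by rewrite !compA E. Qed.

End ICat.

Lemma tl2 (C : Category) (a b c d : C) (x : hom b c) (y : hom a b) (z : hom d c) (w : hom a d) :
  x ⊙ y = z ⊙ w -> forall J (u : hom J a), x ⊙ (y ⊙ u) = z ⊙ (w ⊙ u).
Proof. move=> E J u. by rewrite !compA E. Qed.


Section ICat2.
Variables (C : Category) (D : icat C) (HD : is_icat D).

Lemma inv_nat (N : icat C) (F G : ifun N D) (HF : is_ifun F) (HG : is_ifun G) eta g :
 is_inat F G eta -> src D ⊙ g = fobj G -> tgt D ⊙ g = fobj F ->
 icmp g eta = ida D ⊙ fobj F -> icmp eta g = ida D ⊙ fobj G -> is_inat G F g.
Proof.
move=> [Hes [Het Hen]] Hgs Hgt Hge Heg. split; [done|split; [done|]].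
move: HF HG => [HFs [HFt _]] [HGs [HGt _]].
move=> J f.
have sGf : src D ⊙ (fmor G ⊙ f) = fobj G ⊙ (src N ⊙ f) by rewrite compA HGs -compA.
have tGf : tgt D ⊙ (fmor G ⊙ f) = fobj G ⊙ (tgt N ⊙ f) by rewrite compA HGt -compA.
have sFf : src D ⊙ (fmor F ⊙ f) = fobj F ⊙ (src N ⊙ f) by rewrite compA HFs -compA.
have tFf : tgt D ⊙ (fmor F ⊙ f) = fobj F ⊙ (tgt N ⊙ f) by rewrite compA HFt -compA.
have sE : forall K (u : hom K _), src D ⊙ (eta ⊙ u) = fobj F ⊙ u by move=> K u; rewrite compA Hes.
have tE : forall K (u : hom K _), tgt D ⊙ (eta ⊙ u) = fobj G ⊙ u by move=> K u; rewrite compA Het.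
have sg : forall K (u : hom K _), src D ⊙ (g ⊙ u) = fobj G ⊙ u by move=> K u; rewrite compA Hgs.
have tg : forall K (u : hom K _), tgt D ⊙ (g ⊙ u) = fobj F ⊙ u by move=> K u; rewrite compA Hgt.
have ge : forall K (u : hom K _), icmp (g ⊙ u) (eta ⊙ u) = ida D ⊙ (fobj F ⊙ u).
  move=> K u. rewrite -cmp_pre //; first by rewrite /composable Hgs Het. by rewrite Hge compA'.
have eg : forall K (u : hom K _), icmp (eta ⊙ u) (g ⊙ u) = ida D ⊙ (fobj G ⊙ u).
  move=> K u. rewrite -cmp_pre //; first by rewrite /composable Hes Hgt. by rewrite Heg compA'.
rewrite -{1}(@cmp_idr _ _ HD _ (fmor G ⊙ f) (fobj G ⊙ (src N ⊙ f))) //.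
rewrite -eg.
rewrite (@cmpA _ _ HD _ (fmor G ⊙ f)); try by rewrite /composable ?sGf ?tE ?sE ?tg.
rewrite -Hen.
rewrite -(@cmpA _ _ HD _ (eta ⊙ _)); try by rewrite /composable ?sE ?tFf ?sFf ?tg.
rewrite (@cmpA _ _ HD _ (g ⊙ _)); try by rewrite /composable ?sg ?tE ?sE ?tFf ?cmp_t // /composable ?sFf ?tg.
rewrite ge cmp_idl //. by rewrite cmp_t // /composable sFf tg.
Qed.
End ICat2.


Section Prod.
Variables (C : Category) (D : icat C) (HD : is_icat D) (P : iprod_data D) (HP : is_iprod P).

Lemma sfst J (u : hom J _) : src D ⊙ (ifst P ⊙ u) = ipr P ⊙ u.
Proof. case: HP => H _. by rewrite compA H. Qed.
Lemma tfst J (u : hom J _) : tgt D ⊙ (ifst P ⊙ u) = pi1 ⊙ u.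
Proof. case: HP => _ [H _]. by rewrite compA H. Qed.
Lemma ssnd J (u : hom J _) : src D ⊙ (isnd P ⊙ u) = ipr P ⊙ u.
Proof. case: HP => _ [_ [H _]]. by rewrite compA H. Qed.
Lemma tsnd J (u : hom J _) : tgt D ⊙ (isnd P ⊙ u) = pi2 ⊙ u.
Proof. case: HP => _ [_ [_ [H _]]]. by rewrite compA H. Qed.

Lemma prod_unique J (a b c : hom J (c0 D)) (h h' : hom J (c1 D)) :
  src D ⊙ h = c -> src D ⊙ h' = c ->
  tgt D ⊙ h = ipr P ⊙ pair a b -> tgt D ⊙ h' = ipr P ⊙ pair a b ->
  icmp (ifst P ⊙ pair a b) h = icmp (ifst P ⊙ pair a b) h' ->
  icmp (isnd P ⊙ pair a b) h = icmp (isnd P ⊙ pair a b) h' -> h = h'.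
Proof.
move=> s1 s2 t1 t2 e1 e2.
have c1 : composable (ifst P ⊙ pair a b) h by rewrite /composable sfst t1.
have c2 : composable (isnd P ⊙ pair a b) h by rewrite /composable ssnd t1.
case: HP => _ [_ [_ [_ H]]].
have q1 : src D ⊙ icmp (ifst P ⊙ pair a b) h = c by rewrite cmp_s.
have q2 : tgt D ⊙ icmp (ifst P ⊙ pair a b) h = a by rewrite cmp_t // tfst pair_pi1.
have q3 : src D ⊙ icmp (isnd P ⊙ pair a b) h = c by rewrite cmp_s.
have q4 : tgt D ⊙ icmp (isnd P ⊙ pair a b) h = b by rewrite cmp_t // tsnd pair_pi2.
have [x [_ Hu]] := H J a b c _ _ q1 q2 q3 q4.
have E1 := Hu h (conj s1 (conj t1 (conj eq_refl eq_refl))).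
have E2 := Hu h' (conj s2 (conj t2 (conj (eq_sym e1) (eq_sym e2)))).
by rewrite -E1 -E2.
Qed.

Lemma iprod_mor_unique J (f g h h' : hom J (c1 D)) :
  iprod_mor P f g h -> iprod_mor P f g h' -> h = h'.
Proof.
move=> [s1 [t1 [f1 g1]]] [s2 [t2 [f2 g2]]].
apply: (prod_unique s1 s2 t1 t2); congruence.
Qed.

Lemma iprod_mor_exists J (f g : hom J (c1 D)) : exists h, iprod_mor P f g h.
Proof.
case: HP => _ [_ [_ [_ H]]].
have c1 : composable f (ifst P ⊙ pair (src D ⊙ f) (src D ⊙ g)) by rewrite /composable tfst pair_pi1.
have c2 : composable g (isnd P ⊙ pair (src D ⊙ f) (src D ⊙ g)) by rewrite /composable tsnd pair_pi2.
have q1 : src D ⊙ icmp f (ifst P ⊙ pair (src D ⊙ f) (src D ⊙ g)) = ipr P ⊙ pair (src D ⊙ f) (src D ⊙ g) by rewrite cmp_s // sfst.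
have q2 : tgt D ⊙ icmp f (ifst P ⊙ pair (src D ⊙ f) (src D ⊙ g)) = tgt D ⊙ f by rewrite cmp_t.
have q3 : src D ⊙ icmp g (isnd P ⊙ pair (src D ⊙ f) (src D ⊙ g)) = ipr P ⊙ pair (src D ⊙ f) (src D ⊙ g) by rewrite cmp_s // ssnd.
have q4 : tgt D ⊙ icmp g (isnd P ⊙ pair (src D ⊙ f) (src D ⊙ g)) = tgt D ⊙ g by rewrite cmp_t.
have [x [[H1 [H2 [H3 H4]]] _]] := H J _ _ _ _ _ q1 q2 q3 q4. exists x. by split.
Qed.

Lemma iprod_mor_pre J K (u : hom K J) (f g h : hom J (c1 D)) :
  iprod_mor P f g h -> iprod_mor P (f ⊙ u) (g ⊙ u) (h ⊙ u).
Proof.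
move=> [s1 [t1 [f1 g1]]].
have c1 : composable (ifst P ⊙ pair (tgt D ⊙ f) (tgt D ⊙ g)) h by rewrite /composable sfst t1.
have c2 : composable (isnd P ⊙ pair (tgt D ⊙ f) (tgt D ⊙ g)) h by rewrite /composable ssnd t1.
have c3 : composable f (ifst P ⊙ pair (src D ⊙ f) (src D ⊙ g)) by rewrite /composable tfst pair_pi1.
have c4 : composable g (isnd P ⊙ pair (src D ⊙ f) (src D ⊙ g)) by rewrite /composable tsnd pair_pi2.
have := f_equal (fun x => x ⊙ u) f1. have := f_equal (fun x => x ⊙ u) g1.
rewrite /= !cmp_pre //. cnorm. move=> G1 F1.
split; [|split; [|split]].
- rewrite compA s1. by cnorm.
- rewrite compA t1. by cnorm.
- exact F1.
- exact G1.
Qed.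

Lemma iprod_mor_id J (a b : hom J (c0 D)) :
  iprod_mor P (ida D ⊙ a) (ida D ⊙ b) (ida D ⊙ (ipr P ⊙ pair a b)).
Proof.
rewrite /iprod_mor !sida // !tida //.
split; [done|split; [done|split]].
- rewrite cmp_idr ?sfst // cmp_idl // tfst; by cnorm.
- rewrite cmp_idr ?ssnd // cmp_idl // tsnd; by cnorm.
Qed.

Lemma iprod_mor_cmp J (f1 f2 g1 g2 h1 h2 : hom J (c1 D)) :
  composable f1 f2 -> composable g1 g2 ->
  iprod_mor P f1 g1 h1 -> iprod_mor P f2 g2 h2 ->
  iprod_mor P (icmp f1 f2) (icmp g1 g2) (icmp h1 h2).
Proof.
move=> cf cg [s1 [t1 [F1 G1]]] [s2 [t2 [F2 G2]]].
have ch : composable h1 h2 by rewrite /composable s1 t2 cf cg.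
split; [|split; [|split]].
- by rewrite !cmp_s.
- by rewrite !cmp_t.
- rewrite !cmp_t // !cmp_s //.
  rewrite cmpA //; first by rewrite /composable sfst t1.
  rewrite F1 -cmpA //; [by rewrite /composable tfst pair_pi1 | by rewrite /composable sfst t2 cf cg | ].
  rewrite cf cg F2 cmpA //. by rewrite /composable tfst pair_pi1.
- rewrite !cmp_t // !cmp_s //.
  rewrite cmpA //; first by rewrite /composable ssnd t1.
  rewrite G1 -cmpA //; [by rewrite /composable tsnd pair_pi2 | by rewrite /composable ssnd t2 cf cg | ].
  rewrite cf cg G2 cmpA //. by rewrite /composable tsnd pair_pi2.
Qed.
End Prod.


Section ProdFun.
Variables (C : Category) (D : icat C) (HD : is_icat D) (P : iprod_data D) (HP : is_iprod P).
Variables (N : icat C) (FA FB : ifun N D) (HA : is_ifun FA) (HB : is_ifun FB).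
Variables (Pm : hom (c1 N) (c1 D)) (HPm : iprod_mor P (fmor FA) (fmor FB) Pm).

Let cmp_s := cmp_s HD. Let cmp_t := cmp_t HD. Let cmp_pre := cmp_pre HD. Let cmpA := cmpA HD.
Let cmp_idl := cmp_idl HD. Let cmp_idr := cmp_idr HD. Let sida := sida HD. Let tida := tida HD.
Let sfst := sfst HP. Let tfst := tfst HP. Let ssnd := ssnd HP. Let tsnd := tsnd HP.
Let iprod_mor_pre := iprod_mor_pre HD HP. Let iprod_mor_cmp := iprod_mor_cmp HD HP.

Definition PF : ifun N D := @Build_ifun C N D (ipr P ⊙ pair (fobj FA) (fobj FB)) Pm.

Lemma fun_s (F : ifun N D) : is_ifun F -> forall J (u : hom J _), src D ⊙ (fmor F ⊙ u) = fobj F ⊙ (src N ⊙ u).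
Proof. move=> [H _] J u. by rewrite compA H compA'. Qed.
Lemma fun_t (F : ifun N D) : is_ifun F -> forall J (u : hom J _), tgt D ⊙ (fmor F ⊙ u) = fobj F ⊙ (tgt N ⊙ u).
Proof. move=> [_ [H _]] J u. by rewrite compA H compA'. Qed.
Lemma fun_comp (F : ifun N D) : is_ifun F -> forall J (f g : hom J _), composable f g ->
  composable (fmor F ⊙ f) (fmor F ⊙ g).
Proof. move=> HF J f g Hc. by rewrite /composable (fun_s HF) (fun_t HF) Hc. Qed.
Lemma fun_cmp (F : ifun N D) : is_ifun F -> forall J (f g : hom J _), composable f g ->
  fmor F ⊙ icmp f g = icmp (fmor F ⊙ f) (fmor F ⊙ g).
Proof. move=> [_ [_ [_ H]]]. exact H. Qed.
Lemma fun_id (F : ifun N D) : is_ifun F -> forall J (u : hom J _), fmor F ⊙ (ida N ⊙ u) = ida D ⊙ (fobj F ⊙ u).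
Proof. move=> [_ [_ [H _]]] J u. by rewrite compA H compA'. Qed.

Lemma Pm_s J (u : hom J _) : src D ⊙ (Pm ⊙ u) = ipr P ⊙ pair (fobj FA ⊙ (src N ⊙ u)) (fobj FB ⊙ (src N ⊙ u)).
Proof. case: HPm => H _. rewrite compA H. cnorm. by rewrite (fun_s HA) (fun_s HB). Qed.
Lemma Pm_t J (u : hom J _) : tgt D ⊙ (Pm ⊙ u) = ipr P ⊙ pair (fobj FA ⊙ (tgt N ⊙ u)) (fobj FB ⊙ (tgt N ⊙ u)).
Proof. case: HPm => _ [H _]. rewrite compA H. cnorm. by rewrite (fun_t HA) (fun_t HB). Qed.

Lemma PF_ifun : is_ifun PF.
Proof.
split; [|split; [|split]] => /=.
- case: HPm => H _. rewrite H. cnorm. by case: HA => -> _; case: HB => -> _.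
- case: HPm => _ [H _]. rewrite H. cnorm. by case: HA => _ [-> _]; case: HB => _ [-> _].
- have H1 := iprod_mor_pre (ida N) HPm.
  have H2 : fmor FA ⊙ ida N = ida D ⊙ fobj FA by case: HA => _ [_ [H _]].
  have H3 : fmor FB ⊙ ida N = ida D ⊙ fobj FB by case: HB => _ [_ [H _]].
  rewrite H2 H3 in H1.
  exact: (iprod_mor_unique HD HP H1 (iprod_mor_id HD HP _ _)).
- move=> J f g Hc.
  have H1 := iprod_mor_pre (icmp f g) HPm.
  rewrite (fun_cmp HA) // (fun_cmp HB) // in H1.
  apply: (iprod_mor_unique HD HP H1).
  apply: iprod_mor_cmp => //; try exact: fun_comp.
  exact: iprod_mor_pre. exact: iprod_mor_pre.
Qed.

Lemma proj1_nat : is_inat PF FA (ifst P ⊙ pair (fobj FA) (fobj FB)).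
Proof.
split; [|split] => /=.
- by rewrite sfst.
- by rewrite tfst pair_pi1.
- move=> J f. case: (iprod_mor_pre f HPm) => _ [_ [H _]].
  rewrite (fun_t HA) (fun_t HB) (fun_s HA) (fun_s HB) in H. cnorm. exact H.
Qed.

Lemma proj2_nat : is_inat PF FB (isnd P ⊙ pair (fobj FA) (fobj FB)).
Proof.
split; [|split] => /=.
- by rewrite ssnd.
- by rewrite tsnd pair_pi2.
- move=> J f. case: (iprod_mor_pre f HPm) => _ [_ [_ H]].
  rewrite (fun_t HA) (fun_t HB) (fun_s HA) (fun_s HB) in H. cnorm. exact H.
Qed.

Lemma pair_nat (FQ : ifun N D) (HQ : is_ifun FQ) q1 q2 h :
  is_inat FQ FA q1 -> is_inat FQ FB q2 ->
  src D ⊙ h = fobj FQ -> tgt D ⊙ h = ipr P ⊙ pair (fobj FA) (fobj FB) ->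
  icmp (ifst P ⊙ pair (fobj FA) (fobj FB)) h = q1 ->
  icmp (isnd P ⊙ pair (fobj FA) (fobj FB)) h = q2 ->
  is_inat FQ PF h.
Proof.
move=> [q1s [q1t q1n]] [q2s [q2t q2n]] hs ht h1 h2.
split; [done|split; [done|]] => /= J f.
have hs' : forall K (u : hom K _), src D ⊙ (h ⊙ u) = fobj FQ ⊙ u by move=> K u; rewrite compA hs.
have ht' : forall K (u : hom K _), tgt D ⊙ (h ⊙ u) = ipr P ⊙ pair (fobj FA ⊙ u) (fobj FB ⊙ u)
  by move=> K u; rewrite compA ht; cnorm.
have q1s' : forall K (u : hom K _), src D ⊙ (q1 ⊙ u) = fobj FQ ⊙ u by move=> K u; rewrite compA q1s.
have q1t' : forall K (u : hom K _), tgt D ⊙ (q1 ⊙ u) = fobj FA ⊙ u by move=> K u; rewrite compA q1t.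
have q2s' : forall K (u : hom K _), src D ⊙ (q2 ⊙ u) = fobj FQ ⊙ u by move=> K u; rewrite compA q2s.
have q2t' : forall K (u : hom K _), tgt D ⊙ (q2 ⊙ u) = fobj FB ⊙ u by move=> K u; rewrite compA q2t.
have h1' : forall K (u : hom K _), icmp (ifst P ⊙ pair (fobj FA ⊙ u) (fobj FB ⊙ u)) (h ⊙ u) = q1 ⊙ u.
  move=> K u. rewrite -h1 cmp_pre //; first by rewrite /composable sfst ht. by cnorm.
have h2' : forall K (u : hom K _), icmp (isnd P ⊙ pair (fobj FA ⊙ u) (fobj FB ⊙ u)) (h ⊙ u) = q2 ⊙ u.
  move=> K u. rewrite -h2 cmp_pre //; first by rewrite /composable ssnd ht. by cnorm.
case: (iprod_mor_pre f HPm) => _ [_ [Pf' Ps']].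
cnorm. rewrite (fun_t HA) (fun_t HB) (fun_s HA) (fun_s HB) in Pf' Ps'.
apply: (prod_unique HD HP (a := fobj FA ⊙ (tgt N ⊙ f)) (b := fobj FB ⊙ (tgt N ⊙ f))
   (c := fobj FQ ⊙ (src N ⊙ f))).
- rewrite cmp_s; first by rewrite /composable hs' (fun_t HQ). by rewrite (fun_s HQ).
- rewrite cmp_s; first by rewrite /composable Pm_s ht'. by rewrite hs'.
- rewrite cmp_t; first by rewrite /composable hs' (fun_t HQ). by rewrite ht'.
- rewrite cmp_t; first by rewrite /composable Pm_s ht'. by rewrite Pm_t.
- rewrite cmpA; [by rewrite /composable sfst ht' | by rewrite /composable hs' (fun_t HQ) |].
  rewrite h1' q1n.
  rewrite cmpA; [by rewrite /composable sfst Pm_t | by rewrite /composable Pm_s ht' |].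
  rewrite Pf' -cmpA; [by rewrite /composable tfst pair_pi1 (fun_s HA)
        | by rewrite /composable sfst ht' |].
  by rewrite h1'.
- rewrite cmpA; [by rewrite /composable ssnd ht' | by rewrite /composable hs' (fun_t HQ) |].
  rewrite h2' q2n.
  rewrite cmpA; [by rewrite /composable ssnd Pm_t | by rewrite /composable Pm_s ht' |].
  rewrite Ps' -cmpA; [by rewrite /composable tsnd pair_pi2 (fun_s HB)
        | by rewrite /composable ssnd ht' |].
  by rewrite h2'.
Qed.
End ProdFun.


Section Gen.
Variable C : Category.

Lemma comp_ifun (D E F : icat C) (G : ifun E F) (H : ifun D E) :
  is_ifun G -> is_ifun H -> is_ifun (ifun_comp G H).
Proof.
move=> HG HH. split; [|split; [|split]] => /=.
- by cnorm; rewrite (fun_s HG) (proj1 HH).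
- by cnorm; rewrite (fun_t HG) (proj1 (proj2 HH)).
- by cnorm; rewrite (proj1 (proj2 (proj2 HH))) compA (proj1 (proj2 (proj2 HG))) compA'.
- move=> J f g Hc. rewrite !compA' (fun_cmp HH) // (fun_cmp HG) //. exact: fun_comp.
Qed.

Lemma whisker (D E F : icat C) (H : ifun E F) (G1 G2 : ifun D E) eta :
  is_ifun H -> is_ifun G1 -> is_ifun G2 -> is_inat G1 G2 eta ->
  is_inat (ifun_comp H G1) (ifun_comp H G2) (fmor H ⊙ eta).
Proof.
move=> HH HG1 HG2 [es [et en]]. split; [|split] => /=.
- by rewrite compA (proj1 HH) compA' es.
- by rewrite compA (proj1 (proj2 HH)) compA' et.
- move=> J f. rewrite !compA' -!(fun_cmp HH); last by rewrite en.
  all: by rewrite /composable ?(fun_s HG2) ?(fun_t HG1) !compA ?es ?et.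
Qed.

Section Down.
Variables (M' X' N : icat C) (Il : ifun M' X') (HIl : is_ifun Il)
  (isoI : iso_C (fobj Il)) (monI : monic_C (fmor Il)).

Lemma ifun_down (F : ifun N M') : is_ifun (ifun_comp Il F) -> is_ifun F.
Proof.
move=> H.
have Hs : src M' ⊙ fmor F = fobj F ⊙ src N.
  apply: (iso_mono isoI). rewrite compA -(proj1 HIl) compA'. rewrite (proj1 H) /=. by rewrite compA'.
have Ht : tgt M' ⊙ fmor F = fobj F ⊙ tgt N.
  apply: (iso_mono isoI). rewrite compA -(proj1 (proj2 HIl)) compA'. rewrite (proj1 (proj2 H)) /=. by rewrite compA'.
split; [done|split; [done|split]].
- apply: monI. rewrite compA. rewrite (proj1 (proj2 (proj2 H))) /=.
  by rewrite [RHS]compA (proj1 (proj2 (proj2 HIl))) !compA'.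
- move=> J f g Hc. apply: monI. rewrite compA. rewrite (proj2 (proj2 (proj2 H))) //=.
  rewrite (proj2 (proj2 (proj2 HIl))); last by rewrite !compA'.
  move: Hc. rewrite /composable !compA Hs Ht !compA' => ->. done.
Qed.

Lemma nat_down (F G : ifun N M') eta : is_ifun F -> is_ifun G ->
  is_inat (ifun_comp Il F) (ifun_comp Il G) (fmor Il ⊙ eta) -> is_inat F G eta.
Proof.
move=> HF HG [es [et en]].
have Hs : src M' ⊙ eta = fobj F.
  apply: (iso_mono isoI). by rewrite compA -(proj1 HIl) compA' es.
have Ht : tgt M' ⊙ eta = fobj G.
  apply: (iso_mono isoI). by rewrite compA -(proj1 (proj2 HIl)) compA' et.
split; [done|split; [done|]].
move=> J f. apply: monI.
rewrite !(proj2 (proj2 (proj2 HIl))); last by have := en J f; rewrite /= !compA'.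
all: by rewrite /composable ?(fun_s HG) ?(fun_t HF) !compA ?Hs ?Ht.
Qed.
End Down.

Lemma lift_cmp (M' X' : icat C) (Il : ifun M' X') (HIl : is_ifun Il) (isoI : iso_C (fobj Il))
  J (x y : hom J (c1 X')) : lies_in Il x -> lies_in Il y -> composable x y -> lies_in Il (icmp x y).
Proof.
move=> [kx <-] [ky <-] Hc. exists (icmp kx ky).
rewrite (proj2 (proj2 (proj2 HIl))) //.
apply: (iso_mono isoI). move: Hc. by rewrite /composable -(fun_s HIl) -(fun_t HIl).
Qed.
End Gen.


Lemma one_eq (C : Category) (a : C) (f g : hom a one) : f = g.
Proof. by rewrite (bang_uniq f) (bang_uniq g). Qed.

Lemma pow_ifun_is (C : Category) (D E : icat C) (F : ifun D E) :
  is_ifun F -> forall n, is_ifun (pow_ifun n F).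
Proof.
move=> HF. elim=> [|m IH].
- split; [|split; [|split]]; try move=> *; exact: one_eq.
- split; [|split; [|split]] => /=; rewrite /prodmap; cnorm.
  + by rewrite (fun_s HF) (fun_s IH).
  + by rewrite (fun_t HF) (fun_t IH).
  + by rewrite (fun_id HF) (fun_id IH).
  + move=> J f g Hc.
    have H1 : composable (pi1 ⊙ f) (pi1 ⊙ g).
      have := f_equal (fun x => pi1 ⊙ x) Hc. rewrite /= /prodmap. cnorm. by [].
    have H2 : composable (pi2 ⊙ f) (pi2 ⊙ g).
      have := f_equal (fun x => pi2 ⊙ x) Hc. rewrite /= /prodmap. cnorm. by [].
    cnorm. by rewrite (fun_cmp HF) // (fun_cmp IH).
Qed.


Section Main.
Variables (C : Category) (X M : rgcat C) (I : rgfun M X)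
  (P0 : iprod_data (r0 X)) (P1 : iprod_data (r1 X))
  (HI : is_rgcat_iso I) (HS : stable_products I P0 P1) (n : nat).

Local Notation N := (pow_rgcat n M).

Lemma X0i : is_icat (r0 X). Proof. by case: HI => [[? _] _]. Qed.
Lemma X1i : is_icat (r1 X). Proof. by case: HI => [[_ [? _]] _]. Qed.
Lemma M0i : is_icat (r0 M). Proof. by case: HI => [_ [[? _] _]]. Qed.
Lemma M1i : is_icat (r1 M). Proof. by case: HI => [_ [[_ [? _]] _]]. Qed.
Lemma fXi s : is_ifun (face X s). Proof. by case: HI => [[_ [_ [H _]]] _]. Qed.
Lemma dXi : is_ifun (degen X). Proof. by case: HI => [[_ [_ [_ [H _]]]] _]. Qed.
Lemma fMi s : is_ifun (face M s). Proof. by case: HI => [_ [[_ [_ [H _]]] _]]. Qed.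
Lemma dMi : is_ifun (degen M). Proof. by case: HI => [_ [[_ [_ [_ [H _]]]] _]]. Qed.
Lemma fdX_o s : fobj (face X s) ⊙ fobj (degen X) = idc _.
Proof. by case: HI => [[_ [_ [_ [_ [_ H]]]]] _]; case: (H s). Qed.
Lemma fdX_m s : fmor (face X s) ⊙ fmor (degen X) = idc _.
Proof. by case: HI => [[_ [_ [_ [_ [_ H]]]]] _]; case: (H s). Qed.
Lemma I0i : is_ifun (F0 I). Proof. by case: HI => [_ [_ [[H _] _]]]. Qed.
Lemma I1i : is_ifun (F1 I). Proof. by case: HI => [_ [_ [[_ H] _]]]. Qed.
Lemma isoI0 : iso_C (fobj (F0 I)). Proof. by case: HI => [_ [_ [_ [H _]]]]. Qed.
Lemma isoI1 : iso_C (fobj (F1 I)). Proof. by case: HI => [_ [_ [_ [_ [H _]]]]]. Qed.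
Lemma monI0 : monic_C (fmor (F0 I)). Proof. by case: HI => [_ [_ [_ [_ [_ [H _]]]]]]. Qed.
Lemma monI1 : monic_C (fmor (F1 I)). Proof. by case: HI => [_ [_ [_ [_ [_ [_ [H _]]]]]]]. Qed.
Lemma Iface_o s : fobj (F0 I) ⊙ fobj (face M s) = fobj (face X s) ⊙ fobj (F1 I).
Proof. by case: HI => [_ [_ [_ [_ [_ [_ [_ [H _]]]]]]]]; case: (H s). Qed.
Lemma Iface_m s : fmor (F0 I) ⊙ fmor (face M s) = fmor (face X s) ⊙ fmor (F1 I).
Proof. by case: HI => [_ [_ [_ [_ [_ [_ [_ [H _]]]]]]]]; case: (H s). Qed.
Lemma Ideg_o : fobj (F1 I) ⊙ fobj (degen M) = fobj (degen X) ⊙ fobj (F0 I).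
Proof. by case: HI => [_ [_ [_ [_ [_ [_ [_ [_ [H _]]]]]]]]]; case: H. Qed.
Lemma Ideg_m : fmor (F1 I) ⊙ fmor (degen M) = fmor (degen X) ⊙ fmor (F0 I).
Proof. by case: HI => [_ [_ [_ [_ [_ [_ [_ [_ [H _]]]]]]]]]; case: H. Qed.
Lemma Ieps : eps I = ida (r1 X) ⊙ (fobj (degen X) ⊙ fobj (F0 I)).
Proof. by case: HI => [_ [_ [_ [_ [_ [_ [_ [_ [_ [H _]]]]]]]]]]. Qed.
Lemma allM1 : all_iso (r1 M).
Proof. by case: HI => [_ [_ [_ [_ [_ [_ [_ [_ [_ [_ [_ H]]]]]]]]]]]. Qed.
Lemma HP0 : is_iprod P0. Proof. by case: HS. Qed.
Lemma HP1 : is_iprod P1. Proof. by case: HS => _ []. Qed.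
Lemma lift0 J (f g h : hom J (c1 (r0 X))) :
  lies_in (F0 I) f -> lies_in (F0 I) g -> iprod_mor P0 f g h -> lies_in (F0 I) h.
Proof. case: HS => _ [_ [H _]]. exact: H. Qed.
Lemma lift1 J (f g h : hom J (c1 (r1 X))) :
  lies_in (F1 I) f -> lies_in (F1 I) g -> iprod_mor P1 f g h -> lies_in (F1 I) h.
Proof. case: HS => _ [_ [_ [H _]]]. exact: H. Qed.
Lemma face_ipr s : fobj (face X s) ⊙ ipr P1 = ipr P0 ⊙ prodmap (fobj (face X s)) (fobj (face X s)).
Proof. case: HS => _ [_ [_ [_ [H _]]]]. by case: (H s). Qed.
Lemma face_cmp s J (a b : hom J (c0 (r1 X))) (c : hom J (c1 (r0 X))) :
       src (r0 X) ⊙ c = fobj (face X s) ⊙ (ipr P1 ⊙ pair a b) ->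
       tgt (r0 X) ⊙ c = ipr P0 ⊙ pair (fobj (face X s) ⊙ a) (fobj (face X s) ⊙ b) ->
       icmp (ifst P0 ⊙ pair (fobj (face X s) ⊙ a) (fobj (face X s) ⊙ b)) c
         = fmor (face X s) ⊙ (ifst P1 ⊙ pair a b) ->
       icmp (isnd P0 ⊙ pair (fobj (face X s) ⊙ a) (fobj (face X s) ⊙ b)) c
         = fmor (face X s) ⊙ (isnd P1 ⊙ pair a b) ->
       c = ida (r0 X) ⊙ (fobj (face X s) ⊙ (ipr P1 ⊙ pair a b)).
Proof. case: HS => _ [_ [_ [_ [H _]]]]. case: (H s) => _ H'. exact: H'. Qed.
Lemma deg_cmp J (a b : hom J (c0 (r0 X))) (c : hom J (c1 (r1 X))) :
     src (r1 X) ⊙ c = fobj (degen X) ⊙ (ipr P0 ⊙ pair a b) ->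
     tgt (r1 X) ⊙ c = ipr P1 ⊙ pair (fobj (degen X) ⊙ a) (fobj (degen X) ⊙ b) ->
     icmp (ifst P1 ⊙ pair (fobj (degen X) ⊙ a) (fobj (degen X) ⊙ b)) c
       = fmor (degen X) ⊙ (ifst P0 ⊙ pair a b) ->
     icmp (isnd P1 ⊙ pair (fobj (degen X) ⊙ a) (fobj (degen X) ⊙ b)) c
       = fmor (degen X) ⊙ (isnd P0 ⊙ pair a b) ->
     is_iiso c /\ lies_in (F1 I) c.
Proof. case: HS => _ [_ [_ [_ [_ H]]]]. exact: H. Qed.

Lemma face_ipr_t s J (a b : hom J _) :
  fobj (face X s) ⊙ (ipr P1 ⊙ pair a b) = ipr P0 ⊙ pair (fobj (face X s) ⊙ a) (fobj (face X s) ⊙ b).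
Proof. rewrite compA face_ipr /prodmap. by cnorm. Qed.
Lemma fdX_o_t s J (u : hom J _) : fobj (face X s) ⊙ (fobj (degen X) ⊙ u) = u.
Proof. by rewrite compA fdX_o comp1l. Qed.
Lemma fdX_m_t s J (u : hom J _) : fmor (face X s) ⊙ (fmor (degen X) ⊙ u) = u.
Proof. by rewrite compA fdX_m comp1l. Qed.

Lemma face_fst s J (a b : hom J _) :
  fmor (face X s) ⊙ (ifst P1 ⊙ pair a b) = ifst P0 ⊙ pair (fobj (face X s) ⊙ a) (fobj (face X s) ⊙ b).
Proof.
set a' := fobj (face X s) ⊙ a. set b' := fobj (face X s) ⊙ b.
have q1 : src (r0 X) ⊙ (fmor (face X s) ⊙ (ifst P1 ⊙ pair a b)) = fobj (face X s) ⊙ (ipr P1 ⊙ pair a b)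
  by rewrite (fun_s (fXi s)) (sfst HP1).
have q2 : tgt (r0 X) ⊙ (fmor (face X s) ⊙ (ifst P1 ⊙ pair a b)) = a'
  by rewrite (fun_t (fXi s)) (tfst HP1) pair_pi1.
have q3 : src (r0 X) ⊙ (fmor (face X s) ⊙ (isnd P1 ⊙ pair a b)) = fobj (face X s) ⊙ (ipr P1 ⊙ pair a b)
  by rewrite (fun_s (fXi s)) (ssnd HP1).
have q4 : tgt (r0 X) ⊙ (fmor (face X s) ⊙ (isnd P1 ⊙ pair a b)) = b'
  by rewrite (fun_t (fXi s)) (tsnd HP1) pair_pi2.
case: HP0 => _ [_ [_ [_ H]]].
have [c [[c1 [c2 [c3 c4]]] _]] := H J _ _ _ _ _ q1 q2 q3 q4.
have E := face_cmp c1 c2 c3 c4.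
rewrite -c3 E cmp_idr //. exact: X0i.
by rewrite (sfst HP0) face_ipr_t.
Qed.

Lemma face_snd s J (a b : hom J _) :
  fmor (face X s) ⊙ (isnd P1 ⊙ pair a b) = isnd P0 ⊙ pair (fobj (face X s) ⊙ a) (fobj (face X s) ⊙ b).
Proof.
set a' := fobj (face X s) ⊙ a. set b' := fobj (face X s) ⊙ b.
have q1 : src (r0 X) ⊙ (fmor (face X s) ⊙ (ifst P1 ⊙ pair a b)) = fobj (face X s) ⊙ (ipr P1 ⊙ pair a b)
  by rewrite (fun_s (fXi s)) (sfst HP1).
have q2 : tgt (r0 X) ⊙ (fmor (face X s) ⊙ (ifst P1 ⊙ pair a b)) = a'
  by rewrite (fun_t (fXi s)) (tfst HP1) pair_pi1.
have q3 : src (r0 X) ⊙ (fmor (face X s) ⊙ (isnd P1 ⊙ pair a b)) = fobj (face X s) ⊙ (ipr P1 ⊙ pair a b)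
  by rewrite (fun_s (fXi s)) (ssnd HP1).
have q4 : tgt (r0 X) ⊙ (fmor (face X s) ⊙ (isnd P1 ⊙ pair a b)) = b'
  by rewrite (fun_t (fXi s)) (tsnd HP1) pair_pi2.
case: HP0 => _ [_ [_ [_ H]]].
have [c [[c1 [c2 [c3 c4]]] _]] := H J _ _ _ _ _ q1 q2 q3 q4.
have E := face_cmp c1 c2 c3 c4.
rewrite -c4 E cmp_idr //. exact: X0i.
by rewrite (ssnd HP0) face_ipr_t.
Qed.


Lemma face_iprod s J (f g h : hom J (c1 (r1 X))) :
  iprod_mor P1 f g h ->
  iprod_mor P0 (fmor (face X s) ⊙ f) (fmor (face X s) ⊙ g) (fmor (face X s) ⊙ h).
Proof.
move=> [s1 [t1 [F1 G1]]].
have HX1 := X1i. have HX0 := X0i.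
split; [|split; [|split]].
- by rewrite !(fun_s (fXi s)) s1 face_ipr_t.
- by rewrite !(fun_t (fXi s)) t1 face_ipr_t.
- rewrite !(fun_t (fXi s)) !(fun_s (fXi s)) -!face_fst.
  rewrite -(fun_cmp (fXi s)); first by rewrite /composable (sfst HP1) t1.
  rewrite F1 (fun_cmp (fXi s)) //. by rewrite /composable (tfst HP1) pair_pi1.
- rewrite !(fun_t (fXi s)) !(fun_s (fXi s)) -!face_snd.
  rewrite -(fun_cmp (fXi s)); first by rewrite /composable (ssnd HP1) t1.
  rewrite G1 (fun_cmp (fXi s)) //. by rewrite /composable (tsnd HP1) pair_pi2.
Qed.

Lemma dNi : is_ifun (degen N). Proof. exact: (pow_ifun_is dMi n). Qed.
Lemma fNi s : is_ifun (face N s). Proof. exact: (pow_ifun_is (fMi s) n). Qed.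

Lemma epsI_eq (F : rgfun N M) : src (r1 M) ⊙ eps F = fobj (degen M) ⊙ fobj (F0 F) ->
  eps (rgfun_comp I F) = fmor (F1 I) ⊙ eps F.
Proof.
move=> H. rewrite /= Ieps. cnorm. apply: (cmp_idr X1i).
by rewrite (fun_s I1i) H (tl2 Ideg_o).
Qed.

Section Fun.
Variables (A : rgfun N M) (HA : MnM_obj A).

Lemma A0i : is_ifun (F0 A). Proof. by case: HA => [[H _] _]. Qed.
Lemma A1i : is_ifun (F1 A). Proof. by case: HA => [[_ H] _]. Qed.
Lemma IA0i : is_ifun (F0 (rgfun_comp I A)). Proof. exact: (comp_ifun I0i A0i). Qed.
Lemma IA1i : is_ifun (F1 (rgfun_comp I A)). Proof. exact: (comp_ifun I1i A1i). Qed.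
Lemma Aface_o s : fobj (face M s) ⊙ fobj (F1 A) = fobj (F0 A) ⊙ fobj (face N s).
Proof. by case: HA => [_ [H _]]; case: (H s). Qed.
Lemma Aface_m s : fmor (face M s) ⊙ fmor (F1 A) = fmor (F0 A) ⊙ fmor (face N s).
Proof. by case: HA => [_ [H _]]; case: (H s). Qed.
Lemma IA_face_o s : fobj (face X s) ⊙ fobj (F1 (rgfun_comp I A)) = fobj (F0 (rgfun_comp I A)) ⊙ fobj (face N s).
Proof. rewrite /= -(tl2 (Iface_o s)) Aface_o. by cnorm. Qed.
Lemma IA_face_m s : fmor (face X s) ⊙ fmor (F1 (rgfun_comp I A)) = fmor (F0 (rgfun_comp I A)) ⊙ fmor (face N s).
Proof. rewrite /= -(tl2 (Iface_m s)) Aface_m. by cnorm. Qed.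
Lemma A_eps_nat : is_inat (ifun_comp (degen M) (F0 A)) (ifun_comp (F1 A) (degen N)) (eps A).
Proof. by case: HA => [_ [_ [[H _] _]]]. Qed.
Lemma A_eps_face s : fmor (face M s) ⊙ eps A = ida (r0 M) ⊙ fobj (F0 A).
Proof. by case: HA => [_ [_ [_ H]]]. Qed.
Lemma IA_eps : eps (rgfun_comp I A) = fmor (F1 I) ⊙ eps A.
Proof. apply: epsI_eq. by case: A_eps_nat. Qed.
Lemma IA_eps_nat : is_inat (ifun_comp (degen X) (F0 (rgfun_comp I A)))
   (ifun_comp (F1 (rgfun_comp I A)) (degen N)) (eps (rgfun_comp I A)).
Proof.
have W := whisker I1i (comp_ifun dMi A0i) (comp_ifun A1i dNi) A_eps_nat.
rewrite IA_eps.
have -> : ifun_comp (degen X) (F0 (rgfun_comp I A)) = ifun_comp (F1 I) (ifun_comp (degen M) (F0 A)).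
  apply: ifun_ext => /=. by rewrite (tl2 Ideg_o). by rewrite (tl2 Ideg_m).
have -> : ifun_comp (F1 (rgfun_comp I A)) (degen N) = ifun_comp (F1 I) (ifun_comp (F1 A) (degen N)).
  apply: ifun_ext => /=; by rewrite compA'.
exact W.
Qed.
Lemma IA_eps_face s : fmor (face X s) ⊙ eps (rgfun_comp I A) = ida (r0 X) ⊙ fobj (F0 (rgfun_comp I A)).
Proof.
rewrite IA_eps -(tl2 (Iface_m s)) A_eps_face /=. by rewrite (fun_id I0i).
Qed.
Lemma IA_eps_s : src (r1 X) ⊙ eps (rgfun_comp I A) = fobj (degen X) ⊙ fobj (F0 (rgfun_comp I A)).
Proof. by case: IA_eps_nat. Qed.
Lemma IA_eps_t : tgt (r1 X) ⊙ eps (rgfun_comp I A) = fobj (F1 (rgfun_comp I A)) ⊙ fobj (degen N).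
Proof. by case: IA_eps_nat => _ []. Qed.
End Fun.

Definition hom_abs (G0 : ifun (r0 N) (r0 X)) (G1 : ifun (r1 N) (r1 X)) (eG : hom (c0 (r0 N)) (c1 (r1 X)))
  (H0 : ifun (r0 N) (r0 X)) (H1 : ifun (r1 N) (r1 X)) (eH : hom (c0 (r0 N)) (c1 (r1 X)))
  (e : rgnat N X) : Prop :=
  is_inat G0 H0 (eta0 e) /\ is_inat G1 H1 (eta1 e) /\
  (forall s, fmor (face X s) ⊙ eta1 e = eta0 e ⊙ fobj (face N s)) /\
  icmp (eta1 e ⊙ fobj (degen N)) eG = icmp eH (fmor (degen X) ⊙ eta0 e).

Lemma hom_abs_MnM (F G : rgfun N M) e :
  hom_abs (F0 (rgfun_comp I F)) (F1 (rgfun_comp I F)) (eps (rgfun_comp I F))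
          (F0 (rgfun_comp I G)) (F1 (rgfun_comp I G)) (eps (rgfun_comp I G)) e <-> MnM_hom I F G e.
Proof.
split.
- move=> [a [b [c d]]]. split; [split|split]; [exact a | exact b | exact c | exact d].
- move=> [[a b] [c d]]. split; [exact a | split; [exact b | split; [exact c | exact d]]].
Qed.

Section Abs.
Variables (FA0 FB0 : ifun (r0 N) (r0 X)) (FA1 FB1 : ifun (r1 N) (r1 X))
  (eA eB : hom (c0 (r0 N)) (c1 (r1 X))).
Hypotheses (HA0 : is_ifun FA0) (HB0 : is_ifun FB0) (HA1 : is_ifun FA1) (HB1 : is_ifun FB1)
 (HAfo : forall s, fobj (face X s) ⊙ fobj FA1 = fobj FA0 ⊙ fobj (face N s))
 (HBfo : forall s, fobj (face X s) ⊙ fobj FB1 = fobj FB0 ⊙ fobj (face N s))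
 (HAfm : forall s, fmor (face X s) ⊙ fmor FA1 = fmor FA0 ⊙ fmor (face N s))
 (HBfm : forall s, fmor (face X s) ⊙ fmor FB1 = fmor FB0 ⊙ fmor (face N s))
 (HAe : is_inat (ifun_comp (degen X) FA0) (ifun_comp FA1 (degen N)) eA)
 (HBe : is_inat (ifun_comp (degen X) FB0) (ifun_comp FB1 (degen N)) eB)
 (HAef : forall s, fmor (face X s) ⊙ eA = ida (r0 X) ⊙ fobj FA0)
 (HBef : forall s, fmor (face X s) ⊙ eB = ida (r0 X) ⊙ fobj FB0).
Variables (Pm0 : hom (c1 (r0 N)) (c1 (r0 X))) (Pm1 : hom (c1 (r1 N)) (c1 (r1 X)))
  (k0 : hom (c1 (r0 N)) (c1 (r0 M))) (k1 : hom (c1 (r1 N)) (c1 (r1 M)))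
  (inv0 : hom (c0 (r0 X)) (c0 (r0 M))) (inv1 : hom (c0 (r1 X)) (c0 (r1 M)))
  (eta Em : hom (c0 (r0 N)) (c1 (r1 X))) (ke : hom (c0 (r0 N)) (c1 (r1 M))).
Hypotheses (HPm0 : iprod_mor P0 (fmor FA0) (fmor FB0) Pm0)
  (HPm1 : iprod_mor P1 (fmor FA1) (fmor FB1) Pm1)
  (Hk0 : fmor (F0 I) ⊙ k0 = Pm0) (Hk1 : fmor (F1 I) ⊙ k1 = Pm1)
  (Hinv0 : fobj (F0 I) ⊙ inv0 = idc _) (Hinv1 : fobj (F1 I) ⊙ inv1 = idc _)
  (Het1 : src (r1 X) ⊙ eta = fobj (degen X) ⊙ (ipr P0 ⊙ pair (fobj FA0) (fobj FB0)))
  (Het2 : tgt (r1 X) ⊙ eta = ipr P1 ⊙ pair (fobj (degen X) ⊙ fobj FA0) (fobj (degen X) ⊙ fobj FB0))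
  (Het3 : icmp (ifst P1 ⊙ pair (fobj (degen X) ⊙ fobj FA0) (fobj (degen X) ⊙ fobj FB0)) eta
       = fmor (degen X) ⊙ (ifst P0 ⊙ pair (fobj FA0) (fobj FB0)))
  (Het4 : icmp (isnd P1 ⊙ pair (fobj (degen X) ⊙ fobj FA0) (fobj (degen X) ⊙ fobj FB0)) eta
       = fmor (degen X) ⊙ (isnd P0 ⊙ pair (fobj FA0) (fobj FB0)))
  (HEm : iprod_mor P1 eA eB Em)
  (Hke : fmor (F1 I) ⊙ ke = icmp Em eta).

Definition Pfun : rgfun N M :=
  {| F0 := @Build_ifun C (r0 N) (r0 M) (inv0 ⊙ (ipr P0 ⊙ pair (fobj FA0) (fobj FB0))) k0;
     F1 := @Build_ifun C (r1 N) (r1 M) (inv1 ⊙ (ipr P1 ⊙ pair (fobj FA1) (fobj FB1))) k1;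
     eps := ke |}.

Lemma PF0i : is_ifun (PF P0 FA0 FB0 Pm0). Proof. exact: (PF_ifun X0i HP0 HA0 HB0 HPm0). Qed.
Lemma PF1i : is_ifun (PF P1 FA1 FB1 Pm1). Proof. exact: (PF_ifun X1i HP1 HA1 HB1 HPm1). Qed.
Lemma IP0 : F0 (rgfun_comp I Pfun) = PF P0 FA0 FB0 Pm0.
Proof. apply: ifun_ext => /=. by rewrite compA Hinv0 comp1l. exact: Hk0. Qed.
Lemma IP1 : F1 (rgfun_comp I Pfun) = PF P1 FA1 FB1 Pm1.
Proof. apply: ifun_ext => /=. by rewrite compA Hinv1 comp1l. exact: Hk1. Qed.
Lemma P0i : is_ifun (F0 Pfun).
Proof. apply: (ifun_down I0i isoI0 monI0). change (is_ifun (F0 (rgfun_comp I Pfun))). rewrite IP0. exact: PF0i. Qed.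
Lemma P1i : is_ifun (F1 Pfun).
Proof. apply: (ifun_down I1i isoI1 monI1). change (is_ifun (F1 (rgfun_comp I Pfun))). rewrite IP1. exact: PF1i. Qed.

Local Notation a0 := (fobj FA0). Local Notation b0 := (fobj FB0).
Local Notation a1 := (fobj FA1). Local Notation b1 := (fobj FB1).
Local Notation dXo := (fobj (degen X)). Local Notation dNo := (fobj (degen N)).

Lemma eA_s K (u : hom K _) : src (r1 X) ⊙ (eA ⊙ u) = dXo ⊙ (a0 ⊙ u).
Proof. by rewrite compA (proj1 HAe) /= compA'. Qed.
Lemma eB_s K (u : hom K _) : src (r1 X) ⊙ (eB ⊙ u) = dXo ⊙ (b0 ⊙ u).
Proof. by rewrite compA (proj1 HBe) /= compA'. Qed.
Lemma eA_t K (u : hom K _) : tgt (r1 X) ⊙ (eA ⊙ u) = a1 ⊙ (dNo ⊙ u).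
Proof. by rewrite compA (proj1 (proj2 HAe)) /= compA'. Qed.
Lemma eB_t K (u : hom K _) : tgt (r1 X) ⊙ (eB ⊙ u) = b1 ⊙ (dNo ⊙ u).
Proof. by rewrite compA (proj1 (proj2 HBe)) /= compA'. Qed.
Lemma Em_s K (u : hom K _) : src (r1 X) ⊙ (Em ⊙ u) = ipr P1 ⊙ pair (dXo ⊙ (a0 ⊙ u)) (dXo ⊙ (b0 ⊙ u)).
Proof. case: HEm => H _. rewrite compA H. cnorm. by rewrite eA_s eB_s. Qed.
Lemma Em_t K (u : hom K _) : tgt (r1 X) ⊙ (Em ⊙ u) = ipr P1 ⊙ pair (a1 ⊙ (dNo ⊙ u)) (b1 ⊙ (dNo ⊙ u)).
Proof. case: HEm => _ [H _]. rewrite compA H. cnorm. by rewrite eA_t eB_t. Qed.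
Lemma eta_s K (u : hom K _) : src (r1 X) ⊙ (eta ⊙ u) = dXo ⊙ (ipr P0 ⊙ pair (a0 ⊙ u) (b0 ⊙ u)).
Proof. rewrite compA Het1. by cnorm. Qed.
Lemma eta_t K (u : hom K _) : tgt (r1 X) ⊙ (eta ⊙ u) = ipr P1 ⊙ pair (dXo ⊙ (a0 ⊙ u)) (dXo ⊙ (b0 ⊙ u)).
Proof. rewrite compA Het2. by cnorm. Qed.
Lemma cEe0 : composable Em eta.
Proof. rewrite /composable -(comp1r (src _ ⊙ Em)) -(comp1r (tgt _ ⊙ eta)) !compA' Em_s eta_t. by cnorm. Qed.
Lemma eX_s K (u : hom K _) : src (r1 X) ⊙ (icmp Em eta ⊙ u) = dXo ⊙ (ipr P0 ⊙ pair (a0 ⊙ u) (b0 ⊙ u)).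
Proof. by rewrite (cmp_pre X1i _ cEe0) (cmp_s X1i) ?eta_s //; apply: comp_pre cEe0. Qed.
Lemma eX_t K (u : hom K _) : tgt (r1 X) ⊙ (icmp Em eta ⊙ u) = ipr P1 ⊙ pair (a1 ⊙ (dNo ⊙ u)) (b1 ⊙ (dNo ⊙ u)).
Proof. by rewrite (cmp_pre X1i _ cEe0) (cmp_t X1i) ?Em_t //; apply: comp_pre cEe0. Qed.

Lemma eX_fst K (u : hom K _) :
  icmp (ifst P1 ⊙ pair (a1 ⊙ (dNo ⊙ u)) (b1 ⊙ (dNo ⊙ u))) (icmp Em eta ⊙ u)
  = icmp (eA ⊙ u) (fmor (degen X) ⊙ (ifst P0 ⊙ pair (a0 ⊙ u) (b0 ⊙ u))).
Proof.
have HX1 := X1i.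
rewrite (cmp_pre HX1 _ cEe0).
rewrite (cmpA HX1); [by rewrite /composable (sfst HP1) Em_t | exact: comp_pre cEe0 |].
case: (iprod_mor_pre HX1 HP1 u HEm) => _ [_ [F _]].
rewrite eA_t eB_t eA_s eB_s in F. rewrite F.
rewrite -(cmpA HX1); [by rewrite /composable eA_s (tfst HP1) pair_pi1
   | by rewrite /composable (sfst HP1) eta_t |].
have H3 := f_equal (fun x => x ⊙ u) Het3.
rewrite /= (cmp_pre HX1) in H3; first by rewrite /composable (sfst HP1) Het2.
move: H3. cnorm. by move=> ->.
Qed.

Lemma eX_snd K (u : hom K _) :
  icmp (isnd P1 ⊙ pair (a1 ⊙ (dNo ⊙ u)) (b1 ⊙ (dNo ⊙ u))) (icmp Em eta ⊙ u)
  = icmp (eB ⊙ u) (fmor (degen X) ⊙ (isnd P0 ⊙ pair (a0 ⊙ u) (b0 ⊙ u))).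
Proof.
have HX1 := X1i.
rewrite (cmp_pre HX1 _ cEe0).
rewrite (cmpA HX1); [by rewrite /composable (ssnd HP1) Em_t | exact: comp_pre cEe0 |].
case: (iprod_mor_pre HX1 HP1 u HEm) => _ [_ [_ F]].
rewrite eA_t eB_t eA_s eB_s in F. rewrite F.
rewrite -(cmpA HX1); [by rewrite /composable eB_s (tsnd HP1) pair_pi2
   | by rewrite /composable (ssnd HP1) eta_t |].
have H3 := f_equal (fun x => x ⊙ u) Het4.
rewrite /= (cmp_pre HX1) in H3; first by rewrite /composable (ssnd HP1) Het2.
move: H3. cnorm. by move=> ->.
Qed.

Lemma eX_face s : fmor (face X s) ⊙ icmp Em eta = ida (r0 X) ⊙ (ipr P0 ⊙ pair a0 b0).
Proof.
have HX0 := X0i. have HX1 := X1i.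
rewrite (fun_cmp (fXi s) cEe0).
have E1 : fmor (face X s) ⊙ Em = ida (r0 X) ⊙ (ipr P0 ⊙ pair a0 b0).
  have H := face_iprod s HEm. rewrite HAef HBef in H.
  exact: (iprod_mor_unique HX0 HP0 H (iprod_mor_id HX0 HP0 _ _)).
have E2 : fmor (face X s) ⊙ eta = ida (r0 X) ⊙ (ipr P0 ⊙ pair a0 b0).
  apply: (prod_unique HX0 HP0 (a := a0) (b := b0) (c := ipr P0 ⊙ pair a0 b0)).
  - by rewrite (fun_s (fXi s)) Het1 fdX_o_t.
  - by rewrite (sida HX0).
  - by rewrite (fun_t (fXi s)) Het2 face_ipr_t !fdX_o_t.
  - by rewrite (tida HX0).
  - have E : fmor (face X s) ⊙ (ifst P1 ⊙ pair (dXo ⊙ a0) (dXo ⊙ b0)) = ifst P0 ⊙ pair a0 b0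
      by rewrite face_fst !fdX_o_t.
    rewrite -{1}E -(fun_cmp (fXi s)); first by rewrite /composable (sfst HP1) Het2.
    rewrite Het3 fdX_m_t (cmp_idr HX0) //. by rewrite (sfst HP0).
  - have E : fmor (face X s) ⊙ (isnd P1 ⊙ pair (dXo ⊙ a0) (dXo ⊙ b0)) = isnd P0 ⊙ pair a0 b0
      by rewrite face_snd !fdX_o_t.
    rewrite -{1}E -(fun_cmp (fXi s)); first by rewrite /composable (ssnd HP1) Het2.
    rewrite Het4 fdX_m_t (cmp_idr HX0) //. by rewrite (ssnd HP0).
- rewrite E1 E2 (cmp_idl HX0) //; by rewrite (tida HX0).
Qed.

Ltac cs := rewrite /composable;
  do 4 rewrite ?(sfst HP0) ?(tfst HP0) ?(ssnd HP0) ?(tsnd HP0) ?(sfst HP1) ?(tfst HP1)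
    ?(ssnd HP1) ?(tsnd HP1) ?(fun_s dXi) ?(fun_t dXi) ?(fun_s dNi) ?(fun_t dNi)
    ?(fun_s HA0) ?(fun_t HA0) ?(fun_s HB0) ?(fun_t HB0) ?(fun_s HA1) ?(fun_t HA1)
    ?(fun_s HB1) ?(fun_t HB1) ?eA_s ?eA_t ?eB_s ?eB_t ?eX_s ?eX_t
    ?(Pm_s HA0 HB0 HPm0) ?(Pm_t HA0 HB0 HPm0) ?(Pm_s HA1 HB1 HPm1) ?(Pm_t HA1 HB1 HPm1)
    ?pair_pi1 ?pair_pi2;
  cnorm; try done.

Lemma eX_nat : is_inat (ifun_comp (degen X) (PF P0 FA0 FB0 Pm0))
  (ifun_comp (PF P1 FA1 FB1 Pm1) (degen N)) (icmp Em eta).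
Proof.
have HX0 := X0i. have HX1 := X1i.
split. { rewrite /=. have := eX_s (idc _). by rewrite !comp1r. }
split. { rewrite /=. have := eX_t (idc _). rewrite !comp1r => ->. by cnorm. }
move=> J f /=. cnorm.
case: (iprod_mor_pre HX0 HP0 f HPm0) => _ [_ [F0' S0']].
rewrite (fun_t HA0) (fun_t HB0) (fun_s HA0) (fun_s HB0) in F0' S0'.
case: (iprod_mor_pre HX1 HP1 (fmor (degen N) ⊙ f) HPm1) => _ [_ [F1' S1']].
rewrite (fun_t HA1) (fun_t HB1) (fun_s HA1) (fun_s HB1) (fun_t dNi) (fun_s dNi) in F1' S1'.
have nA := proj2 (proj2 HAe) J f. have nB := proj2 (proj2 HBe) J f.
rewrite /= in nA nB. move: nA nB. cnorm => nA nB.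
apply: (prod_unique HX1 HP1 (a := a1 ⊙ (dNo ⊙ (tgt _ ⊙ f))) (b := b1 ⊙ (dNo ⊙ (tgt _ ⊙ f)))
   (c := dXo ⊙ (ipr P0 ⊙ pair (a0 ⊙ (src _ ⊙ f)) (b0 ⊙ (src _ ⊙ f))))).
- rewrite (cmp_s HX1); first by cs. by cs.
- rewrite (cmp_s HX1); first by cs. by cs.
- rewrite (cmp_t HX1); first by cs. by cs.
- rewrite (cmp_t HX1); first by cs. by cs.
- rewrite (cmpA HX1); [by cs | by cs |].
  rewrite eX_fst.
  rewrite -(cmpA HX1); [by cs | by cs |].
  rewrite -(fun_cmp dXi); first by cs.
  rewrite F0' (fun_cmp dXi); first by cs.
  rewrite (cmpA HX1); [by cs | by cs |].
  rewrite nA.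
  rewrite [RHS](cmpA HX1); [by cs | by cs |].
  rewrite F1' -[RHS](cmpA HX1); [by cs | by cs |].
  rewrite eX_fst (cmpA HX1) //; by cs.
- rewrite (cmpA HX1); [by cs | by cs |].
  rewrite eX_snd.
  rewrite -(cmpA HX1); [by cs | by cs |].
  rewrite -(fun_cmp dXi); first by cs.
  rewrite S0' (fun_cmp dXi); first by cs.
  rewrite (cmpA HX1); [by cs | by cs |].
  rewrite nB.
  rewrite [RHS](cmpA HX1); [by cs | by cs |].
  rewrite S1' -[RHS](cmpA HX1); [by cs | by cs |].
  rewrite eX_snd (cmpA HX1) //; by cs.
Qed.

Lemma Hinv0_t K (u : hom K _) : fobj (F0 I) ⊙ (inv0 ⊙ u) = u.
Proof. by rewrite compA Hinv0 comp1l. Qed.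
Lemma Hinv1_t K (u : hom K _) : fobj (F1 I) ⊙ (inv1 ⊙ u) = u.
Proof. by rewrite compA Hinv1 comp1l. Qed.

Lemma P_eps_s : src (r1 M) ⊙ ke = fobj (degen M) ⊙ fobj (F0 Pfun).
Proof.
apply: (iso_mono isoI1). rewrite compA -(proj1 I1i) compA' Hke.
have := eX_s (idc _). rewrite !comp1r => ->.
by rewrite /= (tl2 Ideg_o) Hinv0_t.
Qed.

Lemma IP_eps : eps (rgfun_comp I Pfun) = icmp Em eta.
Proof. by rewrite (epsI_eq (F := Pfun) P_eps_s). Qed.

Lemma P_face : face_preserving Pfun.
Proof.
move=> s. split => /=.
- apply: (iso_mono isoI0). rewrite (tl2 (Iface_o s)) Hinv1_t face_ipr_t HAfo HBfo.
  cnorm. by rewrite Hinv0_t.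
- apply: monI0. rewrite (tl2 (Iface_m s)) Hk1 compA Hk0.
  have H1 := face_iprod s HPm1. rewrite HAfm HBfm in H1.
  exact: (iprod_mor_unique X0i HP0 H1 (iprod_mor_pre X0i HP0 _ HPm0)).
Qed.

Lemma P_nat : is_inat (ifun_comp (degen M) (F0 Pfun)) (ifun_comp (F1 Pfun) (degen N)) ke.
Proof.
apply: (nat_down I1i isoI1 monI1 (comp_ifun dMi P0i) (comp_ifun P1i dNi)).
rewrite Hke.
have -> : ifun_comp (F1 I) (ifun_comp (degen M) (F0 Pfun)) = ifun_comp (degen X) (PF P0 FA0 FB0 Pm0).
  apply: ifun_ext => /=. by rewrite (tl2 Ideg_o) Hinv0_t. by rewrite (tl2 Ideg_m) Hk0.
have -> : ifun_comp (F1 I) (ifun_comp (F1 Pfun) (degen N)) = ifun_comp (PF P1 FA1 FB1 Pm1) (degen N).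
  apply: ifun_ext => /=. cnorm. by rewrite Hinv1_t. by rewrite compA Hk1.
exact: eX_nat.
Qed.

Lemma P_degen : degen_preserving Pfun.
Proof.
split.
- split; first exact: P_nat.
  have Hn := P_nat. case: Hn => ns [nt _].
  case: (allM1 ke) => g [gs [gt [ge eg]]].
  exists g. rewrite /= in ns nt.
  rewrite ns in gt ge. rewrite nt in gs eg.
  split; last by split.
  apply: (inv_nat M1i (comp_ifun dMi P0i) (comp_ifun P1i dNi) P_nat) => //.
- move=> s /=. apply: monI0. rewrite (tl2 (Iface_m s)) Hke eX_face.
  by rewrite (fun_id I0i) Hinv0_t.
Qed.

Lemma P_obj : MnM_obj Pfun.
Proof. split; [split; [exact: P0i | exact: P1i] | split; [exact: P_face | exact: P_degen]]. Qed.

Definition p1 : rgnat N X := @Build_rgnat C N X (ifst P0 ⊙ pair a0 b0) (ifst P1 ⊙ pair a1 b1).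
Definition p2 : rgnat N X := @Build_rgnat C N X (isnd P0 ⊙ pair a0 b0) (isnd P1 ⊙ pair a1 b1).

Lemma eX_fst0 : icmp (ifst P1 ⊙ pair (a1 ⊙ dNo) (b1 ⊙ dNo)) (icmp Em eta)
  = icmp eA (fmor (degen X) ⊙ (ifst P0 ⊙ pair a0 b0)).
Proof. have := eX_fst (idc _). by rewrite !comp1r. Qed.
Lemma eX_snd0 : icmp (isnd P1 ⊙ pair (a1 ⊙ dNo) (b1 ⊙ dNo)) (icmp Em eta)
  = icmp eB (fmor (degen X) ⊙ (isnd P0 ⊙ pair a0 b0)).
Proof. have := eX_snd (idc _). by rewrite !comp1r. Qed.

Lemma p1_hom : hom_abs (F0 (rgfun_comp I Pfun)) (F1 (rgfun_comp I Pfun)) (eps (rgfun_comp I Pfun))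
  FA0 FA1 eA p1.
Proof.
rewrite IP0 IP1 IP_eps. split; [|split; [|split]].
- exact: (proj1_nat X0i HP0 HA0 HB0 HPm0).
- exact: (proj1_nat X1i HP1 HA1 HB1 HPm1).
- move=> s /=. rewrite face_fst HAfo HBfo. by cnorm.
- rewrite /= -eX_fst0. by cnorm.
Qed.

Lemma p2_hom : hom_abs (F0 (rgfun_comp I Pfun)) (F1 (rgfun_comp I Pfun)) (eps (rgfun_comp I Pfun))
  FB0 FB1 eB p2.
Proof.
rewrite IP0 IP1 IP_eps. split; [|split; [|split]].
- exact: (proj2_nat X0i HP0 HA0 HB0 HPm0).
- exact: (proj2_nat X1i HP1 HA1 HB1 HPm1).
- move=> s /=. rewrite face_snd HAfo HBfo. by cnorm.
- rewrite /= -eX_snd0. by cnorm.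
Qed.

Section Univ.
Variables (FQ0 : ifun (r0 N) (r0 X)) (FQ1 : ifun (r1 N) (r1 X)) (eQ : hom (c0 (r0 N)) (c1 (r1 X)))
  (q1 q2 : rgnat N X).
Hypotheses (HQ0 : is_ifun FQ0) (HQ1 : is_ifun FQ1)
  (HQfo : forall s, fobj (face X s) ⊙ fobj FQ1 = fobj FQ0 ⊙ fobj (face N s))
  (HQe : is_inat (ifun_comp (degen X) FQ0) (ifun_comp FQ1 (degen N)) eQ)
  (Hq1 : hom_abs FQ0 FQ1 eQ FA0 FA1 eA q1) (Hq2 : hom_abs FQ0 FQ1 eQ FB0 FB1 eB q2).

Lemma univ : exists h, hom_abs FQ0 FQ1 eQ (F0 (rgfun_comp I Pfun)) (F1 (rgfun_comp I Pfun))
    (eps (rgfun_comp I Pfun)) h /\ MnM_comp p1 h = q1 /\ MnM_comp p2 h = q2 /\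
    forall h', hom_abs FQ0 FQ1 eQ (F0 (rgfun_comp I Pfun)) (F1 (rgfun_comp I Pfun))
    (eps (rgfun_comp I Pfun)) h' -> MnM_comp p1 h' = q1 -> MnM_comp p2 h' = q2 -> h' = h.
Proof.
have HX0 := X0i. have HX1 := X1i.
case: Hq1 => [[q10s [q10t q10n]] [[q11s [q11t q11n]] [q1f q1d]]].
case: Hq2 => [[q20s [q20t q20n]] [[q21s [q21t q21n]] [q2f q2d]]].
rewrite /= in q10s q10t q11s q11t q20s q20t q21s q21t.
case: HP0 => _ [_ [_ [_ U0]]].
have [h0 [[h0s [h0t [h0f h0g]]] h0u]] := U0 _ _ _ _ _ _ q10s q10t q20s q20t.
case: HP1 => _ [_ [_ [_ U1]]].
have [h1 [[h1s [h1t [h1f h1g]]] h1u]] := U1 _ _ _ _ _ _ q11s q11t q21s q21t.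
exists (@Build_rgnat C N X h0 h1).
have h0f_t : forall K (u : hom K _), icmp (ifst P0 ⊙ pair (a0 ⊙ u) (b0 ⊙ u)) (h0 ⊙ u) = eta0 q1 ⊙ u.
  move=> K u. rewrite -h0f (cmp_pre HX0); first by rewrite /composable (sfst HP0) h0t. by cnorm.
have h0g_t : forall K (u : hom K _), icmp (isnd P0 ⊙ pair (a0 ⊙ u) (b0 ⊙ u)) (h0 ⊙ u) = eta0 q2 ⊙ u.
  move=> K u. rewrite -h0g (cmp_pre HX0); first by rewrite /composable (ssnd HP0) h0t. by cnorm.
have h1f_t : forall K (u : hom K _), icmp (ifst P1 ⊙ pair (a1 ⊙ u) (b1 ⊙ u)) (h1 ⊙ u) = eta1 q1 ⊙ u.
  move=> K u. rewrite -h1f (cmp_pre HX1); first by rewrite /composable (sfst HP1) h1t. by cnorm.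
have h1g_t : forall K (u : hom K _), icmp (isnd P1 ⊙ pair (a1 ⊙ u) (b1 ⊙ u)) (h1 ⊙ u) = eta1 q2 ⊙ u.
  move=> K u. rewrite -h1g (cmp_pre HX1); first by rewrite /composable (ssnd HP1) h1t. by cnorm.
have eQs : src (r1 X) ⊙ eQ = fobj (degen X) ⊙ fobj FQ0 by case: HQe.
have eQt : tgt (r1 X) ⊙ eQ = fobj FQ1 ⊙ fobj (degen N) by case: HQe => _ [].
split; [|split; [|split]].
- rewrite IP0 IP1 IP_eps. split; [|split; [|split]].
  + exact: (pair_nat X0i HP0 HA0 HB0 HPm0 HQ0 (conj q10s (conj q10t q10n)) (conj q20s (conj q20t q20n))).
  + exact: (pair_nat X1i HP1 HA1 HB1 HPm1 HQ1 (conj q11s (conj q11t q11n)) (conj q21s (conj q21t q21n))).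
  + move=> s /=.
    have E1 : ifst P0 ⊙ pair (a0 ⊙ fobj (face N s)) (b0 ⊙ fobj (face N s))
        = fmor (face X s) ⊙ (ifst P1 ⊙ pair a1 b1) by rewrite face_fst HAfo HBfo.
    have E2 : isnd P0 ⊙ pair (a0 ⊙ fobj (face N s)) (b0 ⊙ fobj (face N s))
        = fmor (face X s) ⊙ (isnd P1 ⊙ pair a1 b1) by rewrite face_snd HAfo HBfo.
    apply: (prod_unique HX0 HP0 (a := a0 ⊙ fobj (face N s)) (b := b0 ⊙ fobj (face N s))
       (c := fobj FQ0 ⊙ fobj (face N s))).
    * by rewrite compA (proj1 (fXi s)) compA' h1s HQfo.
    * by rewrite compA h0s.
    * by rewrite compA (proj1 (proj2 (fXi s))) compA' h1t face_ipr_t HAfo HBfo.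
    * by rewrite compA h0t; cnorm.
    * rewrite h0f_t E1 -(fun_cmp (fXi s)); first by rewrite /composable (sfst HP1) h1t.
      by rewrite h1f q1f.
    * rewrite h0g_t E2 -(fun_cmp (fXi s)); first by rewrite /composable (ssnd HP1) h1t.
      by rewrite h1g q2f.
  + cbn [eta0 eta1].
    have eXt0 : tgt (r1 X) ⊙ icmp Em eta = ipr P1 ⊙ pair (a1 ⊙ dNo) (b1 ⊙ dNo).
      have := eX_t (idc _). by rewrite !comp1r.
    have c1 : composable (h1 ⊙ dNo) eQ by rewrite /composable compA h1s eQt.
    have c2 : composable (icmp Em eta) (fmor (degen X) ⊙ h0).
      rewrite /composable (fun_t dXi) h0t. have := eX_s (idc _). by rewrite !comp1r.
    have ht1 : tgt (r1 X) ⊙ (h1 ⊙ dNo) = ipr P1 ⊙ pair (a1 ⊙ dNo) (b1 ⊙ dNo) by rewrite compA h1t; cnorm.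
    apply: (prod_unique HX1 HP1 (a := a1 ⊙ dNo) (b := b1 ⊙ dNo) (c := fobj (degen X) ⊙ fobj FQ0)).
    * by rewrite (cmp_s HX1 c1).
    * by rewrite (cmp_s HX1 c2) (fun_s dXi) h0s.
    * by rewrite (cmp_t HX1 c1).
    * rewrite (cmp_t HX1 c2). have := eX_t (idc _). by rewrite !comp1r.
    * rewrite (cmpA HX1); [by rewrite /composable (sfst HP1) ht1 | done |].
      rewrite h1f_t q1d.
      rewrite (cmpA HX1); [by rewrite /composable (sfst HP1) eXt0 | done |].
      rewrite eX_fst0 -(cmpA HX1); [by rewrite /composable (proj1 HAe) (fun_t dXi) (tfst HP0) pair_pi1
          | by rewrite /composable (fun_s dXi) (sfst HP0) (fun_t dXi) h0t |].
      rewrite -(fun_cmp dXi); first by rewrite /composable (sfst HP0) h0t.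
      by rewrite h0f.
    * rewrite (cmpA HX1); [by rewrite /composable (ssnd HP1) ht1 | done |].
      rewrite h1g_t q2d.
      rewrite (cmpA HX1); [by rewrite /composable (ssnd HP1) eXt0 | done |].
      rewrite eX_snd0 -(cmpA HX1); [by rewrite /composable (proj1 HBe) (fun_t dXi) (tsnd HP0) pair_pi2
          | by rewrite /composable (fun_s dXi) (ssnd HP0) (fun_t dXi) h0t |].
      rewrite -(fun_cmp dXi); first by rewrite /composable (ssnd HP0) h0t.
      by rewrite h0g.
- rewrite /MnM_comp /=. rewrite h0f h1f. by case: q1.
- rewrite /MnM_comp /=. rewrite h0g h1g. by case: q2.
- move=> h' [[s0 [t0 _]] [[s1 [t1 _]] _]] E1 E2.
  rewrite IP0 /= in s0 t0. rewrite IP1 /= in s1 t1.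
  have e10 := f_equal (@eta0 _ _ _) E1. have e11 := f_equal (@eta1 _ _ _) E1.
  have e20 := f_equal (@eta0 _ _ _) E2. have e21 := f_equal (@eta1 _ _ _) E2.
  rewrite /= in e10 e11 e20 e21. clear E1 E2.
  case: h' s0 t0 s1 t1 e10 e11 e20 e21 => g0 g1 /= s0 t0 s1 t1 e10 e11 e20 e21.
  congr Build_rgnat.
  + apply: (prod_unique HX0 HP0 s0 h0s t0 h0t); by rewrite ?e10 ?e20.
  + apply: (prod_unique HX1 HP1 s1 h1s t1 h1t); by rewrite ?e11 ?e21.
Qed.
End Univ.

End Abs.

Theorem main_thm : MnM_has_products I n.
Proof.
move=> A B HA HB.
have HX0 := X0i. have HX1 := X1i.
have HA0 := IA0i HA. have HB0 := IA0i HB. have HA1 := IA1i HA. have HB1 := IA1i HB.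
have HAfo := IA_face_o HA. have HBfo := IA_face_o HB.
have HAfm := IA_face_m HA. have HBfm := IA_face_m HB.
have HAe := IA_eps_nat HA. have HBe := IA_eps_nat HB.
have HAef := IA_eps_face HA. have HBef := IA_eps_face HB.
have [Pm0 HPm0] := iprod_mor_exists HX0 HP0 (fmor (F0 (rgfun_comp I A))) (fmor (F0 (rgfun_comp I B))).
have [Pm1 HPm1] := iprod_mor_exists HX1 HP1 (fmor (F1 (rgfun_comp I A))) (fmor (F1 (rgfun_comp I B))).
have [k0 Hk0] : lies_in (F0 I) Pm0.
  apply: (lift0 _ _ HPm0). by exists (fmor (F0 A)). by exists (fmor (F0 B)).
have [k1 Hk1] : lies_in (F1 I) Pm1.
  apply: (lift1 _ _ HPm1). by exists (fmor (F1 A)). by exists (fmor (F1 B)).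
have [inv0 [_ Hinv0]] := isoI0. have [inv1 [_ Hinv1]] := isoI1.
set a0 := fobj (F0 (rgfun_comp I A)). set b0 := fobj (F0 (rgfun_comp I B)).
have q1 : src (r1 X) ⊙ (fmor (degen X) ⊙ (ifst P0 ⊙ pair a0 b0)) = fobj (degen X) ⊙ (ipr P0 ⊙ pair a0 b0)
  by rewrite (fun_s dXi) (sfst HP0).
have q2 : tgt (r1 X) ⊙ (fmor (degen X) ⊙ (ifst P0 ⊙ pair a0 b0)) = fobj (degen X) ⊙ a0
  by rewrite (fun_t dXi) (tfst HP0) pair_pi1.
have q3 : src (r1 X) ⊙ (fmor (degen X) ⊙ (isnd P0 ⊙ pair a0 b0)) = fobj (degen X) ⊙ (ipr P0 ⊙ pair a0 b0)
  by rewrite (fun_s dXi) (ssnd HP0).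
have q4 : tgt (r1 X) ⊙ (fmor (degen X) ⊙ (isnd P0 ⊙ pair a0 b0)) = fobj (degen X) ⊙ b0
  by rewrite (fun_t dXi) (tsnd HP0) pair_pi2.
have [eta [[Het1 [Het2 [Het3 Het4]]] _]] := (proj2 (proj2 (proj2 (proj2 HP1)))) _ _ _ _ _ _ q1 q2 q3 q4.
have [_ Leta] := deg_cmp Het1 Het2 Het3 Het4.
have [Em HEm] := iprod_mor_exists HX1 HP1 (eps (rgfun_comp I A)) (eps (rgfun_comp I B)).
have [ke Hke] : lies_in (F1 I) (icmp Em eta).
{ apply: (lift_cmp I1i isoI1) => //.
  - apply: (lift1 _ _ HEm).
    + exists (eps A). by rewrite IA_eps.
    + exists (eps B). by rewrite IA_eps.
  - rewrite /composable Het2. case: HEm => -> _. by rewrite !IA_eps_s. }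
clear q1 q2 q3 q4.
exists (Pfun (F0 (rgfun_comp I A)) (F0 (rgfun_comp I B)) (F1 (rgfun_comp I A)) (F1 (rgfun_comp I B))
   k0 k1 inv0 inv1 ke).
exists (p1 (F0 (rgfun_comp I A)) (F0 (rgfun_comp I B)) (F1 (rgfun_comp I A)) (F1 (rgfun_comp I B))).
exists (p2 (F0 (rgfun_comp I A)) (F0 (rgfun_comp I B)) (F1 (rgfun_comp I A)) (F1 (rgfun_comp I B))).
split; [|split; [|split]].
- by eapply P_obj; eassumption.
- apply/hom_abs_MnM. by eapply p1_hom; eassumption.
- apply/hom_abs_MnM. by eapply p2_hom; eassumption.
- move=> Q r1 r2 HQ Hr1 Hr2.
  move/hom_abs_MnM: Hr1 => Hr1. move/hom_abs_MnM: Hr2 => Hr2.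
  have HQ0 := IA0i HQ. have HQ1 := IA1i HQ. have HQfo := IA_face_o HQ. have HQe := IA_eps_nat HQ.
  have [h [Hh [E1 [E2 Hu]]]] : _ := univ HA0 HB0 HA1 HB1 HAfo HBfo HAe HBe
     HPm0 HPm1 Hk0 Hk1 Hinv0 Hinv1 Het1 Het2 Het3 Het4 HEm Hke HQ0 HQ1 HQfo HQe Hr1 Hr2.
  exists h. split; [by apply/hom_abs_MnM|split; [done|split; [done|]]].
  move=> h' Hh' E1' E2'. apply: Hu => //. by apply/hom_abs_MnM.
Qed.
End Main.


Theorem lemma46 (C : Category) (X M : rgcat C) (I : rgfun M X)
    (P0 : iprod_data (r0 X)) (P1 : iprod_data (r1 X)) :
  is_rgcat_iso I -> stable_products I P0 P1 ->
  forall n : nat, MnM_has_products I n.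
Proof.
move=> HI HS n. exact (@main_thm C X M I P0 P1 HI HS n).
Qed.
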